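(* Let $\sigma>0$ and let $f$ be $(\sigma',2)$-Gevrey regular on $[0,1]$ for some $\sigma'>\sigma$. Then the multiplication map $X^\sigma\to Y^\sigma$, $u\mapsto fu$, is compact.
   Context: Let $I=(0,1)$. A function $u\in C^\infty(\overline I)$ is $(\sigma,k)$-Gevrey regular ($\sigma,k>0$) if there is $C>0$ with $\sup_{x\in I}|u^{(n)}(x)|\le C\sigma^{-n}(n!)^k$ for all $n\ge0$. For $\sigma>0$, $u\in C^\infty(\overline I)$, integers $0\le N\le M$, $k\in\{0,1,2\}$, $l\in\{0,1\}$, set $|u|^{N,M}_{\sigma,k,l}=\big(\sum_{n=N}^M\frac{\sigma^{2n}}{n!^2(n+1)!^2}n^{k+l}\int_0^1(x/\sigma)^k|\partial_x^nu|^2dx\big)^{1/2}$ (with $0^0:=1$), $|u|^N_{\sigma,k,l}$ the same with $M=\infty$; $\|u\|_{\sigma,0,0}=|u|^0_{\sigma,0,0}$. Boundary seminorms: $[u]^{N,M}_\sigma=(\sum_{n=N}^M\frac{\sigma^{2n+1}}{n!^2(n+1)!^2}|u^{(n)}(0)|^2)^{1/2}$, $[u]^N_\sigma$ the same with $M=\infty$. $X^\sigma=\{u\in C^\infty(\overline I):u(1)=0,\ \|\partial_xu\|_{\sigma,0,0}+|\partial_xu|^0_{\sigma,1,0}+|\partial_xu|^0_{\sigma,2,0}+[\partial_xu]^0_\sigma<\infty\}$ and $Y^\sigma=\{u\in C^\infty(\overline I):\|u\|_{\sigma,0,0}+|u|^0_{\sigma,1,0}+[u]^0_\sigma<\infty\}$,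 Hilbert spaces with norms $\|u\|_{X^\sigma}=(\|\partial_xu\|_{\sigma,0,0}^2+(|\partial_xu|^0_{\sigma,1,0})^2+(|\partial_xu|^0_{\sigma,2,0})^2+([\partial_xu]^0_\sigma)^2)^{1/2}$, $\|u\|_{Y^\sigma}=(\|u\|_{\sigma,0,0}^2+(|u|^0_{\sigma,1,0})^2+([u]^0_\sigma)^2)^{1/2}$. *)

(* Defs.v *)
From Stdlib Require Import Reals Factorial Lra Lia ClassicalEpsilon.
Open Scope R_scope.

(* D is a family of derivatives of u on the closed interval [0,1]:
   D 0 = u on [0,1], D (S n) is the derivative of D n on (0,1), and each
   D n is continuous on [0,1] (within [0,1]).  u in C^oo([0,1]) with
   u^(n) = D n on [0,1]. *)
Definition in01 (x : R) : Prop := 0 <= x <= 1.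

Definition Cinf01 (u : R -> R) (D : nat -> R -> R) : Prop :=
  (forall x, in01 x -> D 0%nat x = u x) /\
  (forall n x, 0 < x < 1 -> derivable_pt_lim (D n) x (D (S n) x)) /\
  (forall n x, in01 x -> limit1_in (D n) in01 (D n x) x).

Definition gevrey (u : R -> R) (sigma : R) (k : nat) : Prop :=
  exists D : nat -> R -> R, Cinf01 u D /\
  exists C : R, C > 0 /\
    forall n x, 0 < x < 1 -> Rabs (D n x) <= C / sigma ^ n * (INR (fact n)) ^ k.

(* Riemann integral over [0,1] (unspecified if not integrable; only used
   for functions continuous on [0,1], which are integrable) *)
Definition Int01 (g : R -> R) : R :=
  epsilon (inhabits 0)
    (fun I => exists pr : Riemann_integrable g 0 1, RiemannInt pr = I).

Definition coef (sigma : R) (n : nat) : R :=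
  sigma ^ (2 * n) / ((INR (fact n)) ^ 2 * (INR (fact (S n))) ^ 2).

Definition sn_term (sigma : R) (k l : nat) (D : nat -> R -> R) (n : nat) : R :=
  coef sigma n * (INR n) ^ (k + l) *
  Int01 (fun x => (x / sigma) ^ k * (D n x) ^ 2).

Definition bd_term (sigma : R) (D : nat -> R -> R) (n : nat) : R :=
  sigma ^ (2 * n + 1) / ((INR (fact n)) ^ 2 * (INR (fact (S n))) ^ 2) * (D n 0) ^ 2.

Definition dshift (D : nat -> R -> R) : nat -> R -> R := fun n => D (S n).

Definition X_partial (sigma : R) (D : nat -> R -> R) (N : nat) : R :=
  sum_f_R0 (fun n => sn_term sigma 0 0 (dshift D) n + sn_term sigma 1 0 (dshift D) n
                     + sn_term sigma 2 0 (dshift D) n + bd_term sigma (dshift D) n) N.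

Definition Y_partial (sigma : R) (D : nat -> R -> R) (N : nat) : R :=
  sum_f_R0 (fun n => sn_term sigma 0 0 D n + sn_term sigma 1 0 D n + bd_term sigma D n) N.

(* ||u||_{X^sigma}^2 <= M, resp. ||u||_{Y^sigma}^2 <= M (series of nonnegative terms) *)
Definition XnormSq_le (sigma : R) (D : nat -> R -> R) (M : R) : Prop :=
  forall N, X_partial sigma D N <= M.
Definition YnormSq_le (sigma : R) (D : nat -> R -> R) (M : R) : Prop :=
  forall N, Y_partial sigma D N <= M.

Definition inX (sigma : R) (u : R -> R) (D : nat -> R -> R) : Prop :=
  Cinf01 u D /\ u 1 = 0 /\ exists M, XnormSq_le sigma D M.
Definition inY (sigma : R) (u : R -> R) (D : nat -> R -> R) : Prop :=
  Cinf01 u D /\ exists M, YnormSq_le sigma D M.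

(* Main.v *)
Require Import Defs.
From Stdlib Require Import Reals Lra Lia ClassicalEpsilon Cantor ZArith.
From Coquelicot Require Import Coquelicot.
From Stdlib Require Import Factorial.
Open Scope R_scope.

Definition clamp (x : R) : R := Rmax 0 (Rmin 1 x).
Lemma clamp_in x : in01 (clamp x).
Proof. unfold clamp, in01, Rmax, Rmin; repeat destruct Rle_dec; lra. Qed.
Lemma clamp_id x : in01 x -> clamp x = x.
Proof. unfold clamp, in01, Rmax, Rmin; repeat destruct Rle_dec; lra. Qed.
Lemma clamp_lip x y : Rabs (clamp x - clamp y) <= Rabs (x - y).
Proof. unfold clamp, Rmax, Rmin; repeat destruct Rle_dec; unfold Rabs;
  repeat destruct Rcase_abs; lra. Qed.

Definition cont01 (g : R -> R) : Prop := forall x, in01 x -> limit1_in g in01 (g x) x.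

Lemma cont01_clamp g : cont01 g -> forall x, continuity_pt (fun t => g (clamp t)) x.
Proof.
  intros Hg x eps Heps.
  destruct (Hg (clamp x) (clamp_in x) eps Heps) as [d [Hd H]].
  exists d; split; auto. intros t [_ Ht]. simpl in *. unfold R_dist in *.
  apply H. split. apply clamp_in. eapply Rle_lt_trans. apply clamp_lip. auto.
Qed.

Lemma cont_clamp g : cont01 g -> forall x, continuous (fun t => g (clamp t)) x.
Proof. intros. apply continuity_pt_filterlim, cont01_clamp; auto. Qed.

Lemma cont01_ex_RInt g a b : cont01 g -> in01 a -> in01 b -> ex_RInt g a b.
Proof.
  intros Hg Ha Hb.
  apply (ex_RInt_ext (fun t => g (clamp t))).
  - intros x Hx. rewrite clamp_id; auto. unfold in01 in *.
    unfold Rmin, Rmax in Hx; destruct Rle_dec; lra.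
  - apply (ex_RInt_continuous (V:=R_CompleteNormedModule)). intros; apply cont_clamp; auto.
Qed.

Lemma Int01_RInt g : cont01 g -> Int01 g = RInt g 0 1.
Proof.
  intros Hg. unfold Int01.
  assert (E : ex_RInt g 0 1) by (apply cont01_ex_RInt; auto; red; lra).
  destruct (epsilon_spec (inhabits 0)
     (fun I => exists pr : Riemann_integrable g 0 1, RiemannInt pr = I))
    as [pr Hpr].
  - exists (RiemannInt (ex_RInt_Reals_0 _ _ _ E)). eauto.
  - rewrite <- Hpr. symmetry. apply RInt_Reals.
Qed.

Lemma cont01_plus f g : cont01 f -> cont01 g -> cont01 (fun x => f x + g x).
Proof. intros Hf Hg x Hx. apply limit_plus; auto. Qed.
Lemma cont01_minus f g : cont01 f -> cont01 g -> cont01 (fun x => f x - g x).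
Proof. intros Hf Hg x Hx. apply limit_minus; auto. Qed.
Lemma cont01_mult f g : cont01 f -> cont01 g -> cont01 (fun x => f x * g x).
Proof. intros Hf Hg x Hx. apply limit_mul; auto. Qed.
Lemma cont01_const c : cont01 (fun _ => c).
Proof. intros x Hx eps He. exists 1; split; [lra|]. intros t _. simpl. unfold Rdist. replace (c - c) with 0 by ring. rewrite Rabs_R0; lra. Qed.
Lemma cont01_id : cont01 (fun x => x).
Proof. intros x Hx eps He. exists eps; split; auto. intros t [_ Ht]; auto. Qed.
Lemma cont01_pow f n : cont01 f -> cont01 (fun x => f x ^ n).
Proof. intros Hf. induction n; simpl. apply cont01_const. apply cont01_mult; auto. Qed.
Lemma cont01_ext f g : (forall x, in01 x -> f x = g x) -> cont01 f -> cont01 g.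
Proof.
  intros E Hf x Hx eps He. destruct (Hf x Hx eps He) as [d [Hd H]].
  exists d; split; auto. intros t [Ht1 Ht2]. rewrite <- !E; auto.
Qed.

Lemma cont01_sum (F : nat -> R -> R) n :
  (forall k, (k <= n)%nat -> cont01 (F k)) -> cont01 (fun x => sum_f_R0 (fun k => F k x) n).
Proof.
  induction n; intros H; simpl. apply H; lia.
  apply cont01_plus. apply IHn; intros; apply H; lia. apply H; lia.
Qed.

Lemma deriv_local (f g : R -> R) x l :
  0 < x < 1 -> (forall t, 0 < t < 1 -> f t = g t) ->
  derivable_pt_lim f x l -> derivable_pt_lim g x l.
Proof.
  intros Hx E H. apply is_derive_Reals. apply is_derive_Reals in H.
  apply (is_derive_ext_loc f); auto.
  assert (Hd : 0 < Rmin x (1 - x)) by (apply Rmin_pos; lra).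
  exists (mkposreal _ Hd). intros t Ht. apply E.
  unfold ball in Ht; simpl in Ht; unfold AbsRing_ball, abs, minus, plus, opp in Ht; simpl in Ht.
  pose proof (Rmin_l x (1-x)); pose proof (Rmin_r x (1-x)).
  unfold Rabs in Ht; destruct Rcase_abs in Ht; lra.
Qed.

Lemma ftc01 (h h' : R -> R) :
  cont01 h -> cont01 h' -> (forall x, 0 < x < 1 -> derivable_pt_lim h x (h' x)) ->
  forall x, in01 x -> h x = h 0 + RInt h' 0 x.
Proof.
  intros Hh Hh' Hd x Hx.
  set (hc := fun t => h' (clamp t)).
  assert (Hc : forall t, continuous hc t) by (intros; apply cont_clamp; auto).
  assert (Eint : forall t, in01 t -> RInt h' 0 t = RInt hc 0 t).
  { intros t Ht. apply RInt_ext. intros y Hy. unfold hc. rewrite clamp_id; auto.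
    unfold in01 in *; unfold Rmin, Rmax in Hy; destruct Rle_dec; lra. }
  set (Phi := fun t => h (clamp t) - RInt hc 0 t).
  assert (DI : forall t, is_derive (fun s => RInt hc 0 s) t (hc t)).
  { intros t. apply (is_derive_RInt (V:=R_CompleteNormedModule) hc _ 0); auto. apply filter_forall. intros s.
    apply (RInt_correct (V:=R_CompleteNormedModule)). apply (ex_RInt_continuous (V:=R_CompleteNormedModule)); auto. }
  assert (HD : forall t, 0 < t < 1 -> derivable_pt_lim Phi t 0).
  { intros t Ht. replace 0 with (h' t - hc t).
    2:{ unfold hc; rewrite clamp_id; [ring | red; lra]. }
    apply derivable_pt_lim_minus.
    - apply (deriv_local h). auto. intros; rewrite clamp_id; auto; red; lra. auto.
    - apply is_derive_Reals; auto. }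
  assert (HC : forall t, continuity_pt Phi t).
  { intros t. apply continuity_pt_minus. apply cont01_clamp; auto.
    apply derivable_continuous_pt. exists (hc t). apply is_derive_Reals; auto. }
  assert (pr : forall t, 0 < t < 1 -> derivable_pt Phi t).
  { intros t Ht. exists 0. apply HD; auto. }
  pose proof (null_derivative_loc Phi 0 1 pr) as K.
  assert (Kc : constant_D_eq Phi (fun x => 0 <= x <= 1) (Phi 0)).
  { apply K. intros; auto. intros t P. apply derive_pt_eq_0. auto. }
  specialize (Kc x Hx). unfold Phi in Kc. rewrite !clamp_id in Kc; auto.
  2: red; lra.
  rewrite RInt_point in Kc. rewrite Eint; auto. unfold zero in Kc; simpl in Kc. lra.
Qed.


Lemma near_pt x d : in01 x -> d > 0 -> exists t, 0 < t < 1 /\ Rabs (t - x) < d.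
Proof.
  intros Hx Hd. unfold in01 in Hx. set (e := Rmin d (1/2) / 2).
  assert (0 < e <= 1/4) by (unfold e; pose proof (Rmin_l d (1/2)); pose proof (Rmin_r d (1/2));
     assert (0 < Rmin d (1/2)) by (apply Rmin_pos; lra); lra).
  assert (e < d) by (unfold e; pose proof (Rmin_l d (1/2));
     assert (0 < Rmin d (1/2)) by (apply Rmin_pos; lra); lra).
  destruct (Rle_dec x (1/2)).
  - exists (x + e). split. lra. replace (x + e - x) with e by ring. rewrite Rabs_pos_eq; lra.
  - exists (x - e). split. lra. replace (x - e - x) with (-e) by ring. rewrite Rabs_Ropp, Rabs_pos_eq; lra.
Qed.

Lemma cont01_bound h B : cont01 h -> (forall t, 0 < t < 1 -> Rabs (h t) <= B) ->
  forall x, in01 x -> Rabs (h x) <= B.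
Proof.
  intros Hh Hb x Hx. apply Rnot_lt_le. intros Hlt.
  destruct (Hh x Hx (Rabs (h x) - B)) as [d [Hd H]]. lra.
  destruct (near_pt x d Hx Hd) as [t [Ht1 Ht2]].
  assert (K : R_dist (h t) (h x) < Rabs (h x) - B).
  { apply H. split. red; lra. exact Ht2. }
  unfold R_dist in K. specialize (Hb t Ht1).
  pose proof (Rabs_triang_inv (h x) (h t)). rewrite <- Rabs_Ropp in K.
  replace (- (h t - h x)) with (h x - h t) in K by ring. lra.
Qed.

Lemma cont01_agree f g : cont01 f -> cont01 g -> (forall t, 0 < t < 1 -> f t = g t) ->
  forall x, in01 x -> f x = g x.
Proof.
  intros Hf Hg E x Hx.
  assert (Hh : cont01 (fun t => f t - g t)) by (apply cont01_minus; auto).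
  assert (forall e, e > 0 -> Rabs (f x - g x) <= e).
  { intros e He. apply (cont01_bound (fun t => f t - g t) e Hh); auto.
    intros t Ht. rewrite E; auto. replace (g t - g t) with 0 by ring. rewrite Rabs_R0; lra. }
  destruct (Req_dec (f x - g x) 0). lra.
  specialize (H (Rabs (f x - g x) / 2)). assert (0 < Rabs (f x - g x)) by (apply Rabs_pos_lt; auto).
  lra.
Qed.

Lemma Cinf01_cont u D n : Cinf01 u D -> cont01 (D n).
Proof. intros [_ [_ H]] x Hx; apply H; auto. Qed.

Lemma Cinf01_unique u D1 D2 : Cinf01 u D1 -> Cinf01 u D2 ->
  forall n x, in01 x -> D1 n x = D2 n x.
Proof.
  intros H1 H2 n. induction n; intros x Hx.
  - destruct H1 as [A _]; destruct H2 as [B _]. rewrite A, B; auto.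
  - apply cont01_agree; try (eapply Cinf01_cont; eauto).
    intros t Ht. destruct H1 as [_ [D1d _]]; destruct H2 as [_ [D2d _]].
    eapply uniqueness_limite. apply D1d; auto.
    apply (deriv_local (D2 n)); auto. intros; symmetry; apply IHn; red; lra. auto.
Qed.

Lemma Cinf01_ftc u D n : Cinf01 u D -> forall x, in01 x -> D n x = D n 0 + RInt (D (S n)) 0 x.
Proof.
  intros H. apply ftc01; try (eapply Cinf01_cont; eauto). destruct H as [_ [H _]]; auto.
Qed.

Lemma RInt_add f g a b : ex_RInt f a b -> ex_RInt g a b ->
  RInt (fun x => f x + g x) a b = RInt f a b + RInt g a b.
Proof. intros. apply (RInt_plus (V:=R_CompleteNormedModule)); auto. Qed.
Lemma RInt_sc c f a b : ex_RInt f a b -> RInt (fun x => c * f x) a b = c * RInt f a b.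
Proof. intros. apply (RInt_scal (V:=R_CompleteNormedModule)); auto. Qed.
Lemma RInt_cst c a b : RInt (fun _ => c) a b = (b - a) * c.
Proof. apply (RInt_const (V:=R_CompleteNormedModule)). Qed.

Lemma ex_RInt_sum (F : nat -> R -> R) n a b :
  (forall k, (k <= n)%nat -> ex_RInt (F k) a b) ->
  ex_RInt (fun x => sum_f_R0 (fun k => F k x) n) a b.
Proof.
  induction n; intros H; simpl. apply H; lia.
  apply (ex_RInt_plus (V:=R_NormedModule)). apply IHn; intros; apply H; lia. apply H; lia.
Qed.

Lemma RInt_sum (F : nat -> R -> R) n a b :
  (forall k, (k <= n)%nat -> ex_RInt (F k) a b) ->
  RInt (fun x => sum_f_R0 (fun k => F k x) n) a b = sum_f_R0 (fun k => RInt (F k) a b) n.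
Proof.
  induction n; intros H; simpl. reflexivity.
  rewrite RInt_add.
  - rewrite IHn; [reflexivity|]. intros; apply H; lia.
  - apply ex_RInt_sum; intros; apply H; lia.
  - apply H; lia.
Qed.

Lemma RInt_mono f g a b : a <= b -> ex_RInt f a b -> ex_RInt g a b ->
  (forall x, a < x < b -> f x <= g x) -> RInt f a b <= RInt g a b.
Proof. intros; apply RInt_le; auto. Qed.

Lemma RInt_nonneg f a b : a <= b -> ex_RInt f a b -> (forall x, a < x < b -> 0 <= f x) -> 0 <= RInt f a b.
Proof.
  intros. rewrite <- (Rmult_0_r (b - a)). rewrite <- RInt_cst. apply RInt_le; auto.
  apply (ex_RInt_const (V:=R_NormedModule)).
Qed.

Lemma RInt_CS h a b : cont01 h -> in01 a -> in01 b -> a <= b ->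
  (RInt h a b)^2 <= (b - a) * RInt (fun x => h x ^ 2) a b.
Proof.
  intros Hh Ha Hb Hab.
  assert (E1 : ex_RInt h a b) by (apply cont01_ex_RInt; auto).
  assert (E2 : ex_RInt (fun x => h x ^ 2) a b) by (apply cont01_ex_RInt; auto; apply cont01_pow; auto).
  destruct (Req_dec a b) as [<-|Hne].
  - rewrite RInt_point. unfold zero; simpl. lra.
  - set (L := b - a). assert (HL : 0 < L) by (unfold L; lra).
    set (c := RInt h a b). set (d := c / L).
    assert (P : 0 <= RInt (fun x => (h x - d) ^ 2) a b).
    { apply RInt_nonneg; auto. apply cont01_ex_RInt; auto. apply cont01_pow, cont01_minus; auto.
      apply cont01_const. intros; apply pow2_ge_0. }
    assert (Ef : RInt (fun x => (h x - d) ^ 2) a b = RInt (fun x => h x ^ 2 + ((-2*d) * h x + d^2)) a b)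
      by (apply (RInt_ext (V:=R_CompleteNormedModule)); intros; simpl; ring).
    assert (E3 : ex_RInt (fun x => (-2*d) * h x) a b) by (apply (ex_RInt_scal (V:=R_NormedModule)); auto).
    assert (E4 : ex_RInt (fun _ : R => d^2) a b) by (apply (ex_RInt_const (V:=R_NormedModule))).
    assert (E5 : ex_RInt (fun x => (-2*d) * h x + d^2) a b) by (apply (ex_RInt_plus (V:=R_NormedModule)); auto).
    rewrite Ef, RInt_add, RInt_add, RInt_sc, RInt_cst in P; auto.
    fold c in P. fold L in P. unfold d in P.
    assert (Q : 0 <= L * RInt (fun x => h x ^ 2) a b - c ^ 2).
    { replace (L * RInt (fun x => h x ^ 2) a b - c ^ 2) with
        (L * (RInt (fun x => h x ^ 2) a b + (-2 * (c / L) * c + L * (c / L) ^ 2))).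
      apply Rmult_le_pos; lra. field. lra. }
    lra.
Qed.


Fixpoint bin (n k : nat) : R :=
  match n, k with
  | O, O => 1
  | O, S _ => 0
  | S _, O => 1
  | S n', S k' => bin n' k' + bin n' (S k')
  end.

Lemma bin_gt n k : (n < k)%nat -> bin n k = 0.
Proof.
  revert k; induction n; intros k H; destruct k; simpl; try lia; auto.
  rewrite !IHn; try lia. ring.
Qed.

Lemma bin_n0 n : bin n 0 = 1.
Proof. destruct n; reflexivity. Qed.

Lemma bin_nonneg n k : 0 <= bin n k.
Proof. revert k; induction n; intros k; destruct k; simpl; try lra.
  pose proof (IHn k); pose proof (IHn (S k)); lra. Qed.

Lemma bin_fact n k : (k <= n)%nat ->
  bin n k * INR (fact k) * INR (fact (n - k)) = INR (fact n).
Proof.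
  revert k; induction n; intros k Hk.
  - destruct k; [|lia]. simpl. lra.
  - destruct k.
    + rewrite bin_n0. simpl (fact 0). replace (S n - 0)%nat with (S n) by lia. simpl INR. ring.
    + simpl bin. replace (S n - S k)%nat with (n - k)%nat by lia.
      destruct (Nat.eq_dec k n) as [->|Hne].
      * rewrite (bin_gt n (S n)) by lia. replace (n - n)%nat with 0%nat by lia.
        pose proof (IHn n (le_n n)). replace (n - n)%nat with 0%nat in H by lia. simpl (fact 0) in *. change (INR 1) with 1 in *. rewrite fact_simpl, mult_INR. transitivity (INR (S n) * (bin n n * INR (fact n) * 1)); [ring|]. rewrite H; ring.
      * pose proof (IHn k ltac:(lia)) as A. pose proof (IHn (S k) ltac:(lia)) as B.
        replace (n - k)%nat with (S (n - S k)) by lia.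
        replace (n - k)%nat with (S (n - S k)) in A by lia.
        rewrite (fact_simpl (n - S k)) in A |- *. rewrite (fact_simpl k) in B |- *. rewrite (fact_simpl n).
        rewrite !mult_INR in *.
        set (a := INR (fact k)) in *. set (b := INR (fact (n - S k))) in *. set (c := INR (fact n)) in *.
        assert (E1 : INR (S (n - S k)) = INR n - INR k) by (rewrite S_INR, minus_INR by lia; rewrite S_INR; ring).
        rewrite E1 in A |- *. rewrite !S_INR in *.
        transitivity ((bin n k * a * ((INR n - INR k) * b)) * (INR k + 1)
          + (bin n (S k) * ((INR k + 1) * a) * b) * (INR n - INR k)).
        ring. rewrite A, B. ring.
Qed.

Definition Leib (F U : nat -> R -> R) (n : nat) (x : R) : R :=
  sum_f_R0 (fun k => bin n k * F k x * U (n - k)%nat x) n.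

Lemma Leib_S (F U : nat -> R -> R) n x :
  sum_f_R0 (fun k => bin n k * (F (S k) x * U (n - k)%nat x + F k x * U (S n - k)%nat x)) n
  = Leib F U (S n) x.
Proof.
  unfold Leib.
  rewrite (decomp_sum _ (S n)) by lia. simpl pred.
  rewrite (sum_eq (fun i => bin (S n) (S i) * F (S i) x * U (S n - S i)%nat x)
                  (fun i => bin n i * F (S i) x * U (n - i)%nat x
                              + bin n (S i) * F (S i) x * U (S n - S i)%nat x)).
  2:{ intros i Hi. simpl bin. replace (S n - S i)%nat with (n - i)%nat by lia. ring. }
  rewrite plus_sum.
  rewrite (sum_eq (fun k => bin n k * (F (S k) x * U (n - k)%nat x + F k x * U (S n - k)%nat x))
    (fun k => bin n k * F (S k) x * U (n - k)%nat x + bin n k * F k x * U (S n - k)%nat x)).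
  2:{ intros; ring. }
  rewrite plus_sum.
  assert (E : sum_f_R0 (fun k => bin n k * F k x * U (S n - k)%nat x) n =
     bin (S n) 0 * F 0%nat x * U (S n - 0)%nat x + sum_f_R0 (fun i => bin n (S i) * F (S i) x * U (S n - S i)%nat x) n).
  { rewrite <- (Rplus_0_r (sum_f_R0 _ n)).
    replace 0 with (bin n (S n) * F (S n) x * U (S n - S n)%nat x) at 1 by (rewrite bin_gt by lia; ring).
    rewrite <- tech5. rewrite (decomp_sum _ (S n)) by lia. simpl pred. rewrite !bin_n0. reflexivity. }
  rewrite E. ring.
Qed.

Lemma deriv_sum (g : nat -> R -> R) (g' : nat -> R) m x :
  (forall k, (k <= m)%nat -> derivable_pt_lim (g k) x (g' k)) ->
  derivable_pt_lim (fun y => sum_f_R0 (fun k => g k y) m) x (sum_f_R0 g' m).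
Proof.
  induction m; intros H; simpl. apply H; lia.
  apply (derivable_pt_lim_plus (fun y => sum_f_R0 (fun k => g k y) m) (g (S m))).
  apply IHm; intros; apply H; lia. apply H; lia.
Qed.

Lemma dpl_eq f x l l' : derivable_pt_lim f x l -> l = l' -> derivable_pt_lim f x l'.
Proof. intros H <-; auto. Qed.

Lemma Leib_Cinf f u F U : Cinf01 f F -> Cinf01 u U ->
  Cinf01 (fun x => f x * u x) (Leib F U).
Proof.
  intros HF HU. split; [|split].
  - intros x Hx. unfold Leib. simpl. destruct HF as [A _]; destruct HU as [B _].
    rewrite A, B; auto. ring.
  - intros n x Hx. rewrite <- Leib_S. unfold Leib.
    apply deriv_sum. intros k Hk.
    destruct HF as [_ [HF _]]; destruct HU as [_ [HU _]].
    eapply dpl_eq.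
    + change (fun y => bin n k * F k y * U (n - k)%nat y) with
        (mult_fct (mult_fct (fun _ => bin n k) (F k)) (U (n - k)%nat)).
      apply derivable_pt_lim_mult. apply derivable_pt_lim_mult.
      apply derivable_pt_lim_const. apply HF; auto. apply HU; auto.
    + unfold mult_fct. replace (S (n - k)) with (S n - k)%nat by lia. ring.
  - intros n x Hx. apply (cont01_sum (fun k x => bin n k * F k x * U (n - k)%nat x)); auto.
    intros k _. apply cont01_mult. apply cont01_mult. apply cont01_const.
    eapply Cinf01_cont; eauto. eapply Cinf01_cont; eauto.
Qed.

Lemma Leib_minus F U V n x :
  Leib F (fun m y => U m y - V m y) n x = Leib F U n x - Leib F V n x.
Proof.
  unfold Leib. rewrite <- minus_sum. apply sum_eq. intros; ring.
Qed.


Definition st_incr (t : nat -> nat) : Prop := forall k, (t k < t (S k))%nat.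

Lemma st_incr_ge t : st_incr t -> forall k, (k <= t k)%nat.
Proof. intros H k; induction k. lia. specialize (H k). lia. Qed.

Lemma st_incr_mono t : st_incr t -> forall k k', (k <= k')%nat -> (t k <= t k')%nat.
Proof. intros H k k' Hk. induction Hk. lia. specialize (H m). lia. Qed.

Lemma st_incr_lt t : st_incr t -> forall a b, (a < b)%nat -> (t a < t b)%nat.
Proof. intros H a b Hab. pose proof (st_incr_mono t H (S a) b Hab). specialize (H a). lia. Qed.

Fixpoint iter_sub (g : nat -> nat -> nat) (k : nat) : nat :=
  match k with O => g O O | S k' => g (S (iter_sub g k')) (S k') end.

Lemma small_inv eps : eps > 0 -> exists N : nat, / (INR N + 1) < eps.
Proof.
  intros He. destruct (archimed (/ eps)) as [H1 _].
  assert (0 <= up (/eps))%Z.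
  { apply le_IZR. pose proof (Rinv_0_lt_compat eps He). simpl. lra. }
  exists (Z.to_nat (up (/ eps))). rewrite INR_IZR_INZ, Z2Nat.id by auto.
  apply (Rmult_lt_reg_l (IZR (up (/eps)) + 1)).
  pose proof (Rinv_0_lt_compat eps He). lra.
  rewrite Rinv_r. 2: pose proof (Rinv_0_lt_compat eps He); lra.
  apply (Rmult_lt_reg_l (/eps)). apply Rinv_0_lt_compat; auto.
  rewrite Rmult_1_r. replace (/ eps * ((IZR (up (/ eps)) + 1) * eps)) with (IZR (up (/ eps)) + 1)
    by (field; lra). lra.
Qed.

Lemma bw_sub (un : nat -> R) K : (forall n, Rabs (un n) <= K) ->
  exists th, st_incr th /\ Cauchy_crit (fun k => un (th k)).
Proof.
  intros Hb.
  destruct (Bolzano_Weierstrass un (fun c => -K <= c <= K) (compact_P3 _ _)) as [l Hl].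
  { intros n; specialize (Hb n); unfold Rabs in Hb; destruct Rcase_abs in Hb; lra. }
  assert (H : forall N k, exists p, (N <= p)%nat /\ Rabs (un p - l) < / (INR k + 1)).
  { intros N k. assert (Hp : 0 < / (INR k + 1)) by (apply Rinv_0_lt_compat; pose proof (pos_INR k); lra).
    destruct (Hl (fun y => Rabs (y - l) < / (INR k + 1)) N) as [p [Hp1 Hp2]].
    - exists (mkposreal _ Hp). intros y Hy. unfold disc in Hy. simpl in Hy. auto.
    - exists p; auto. }
  set (g := fun N k => proj1_sig (constructive_indefinite_description _ (H N k))).
  assert (Hg : forall N k, (N <= g N k)%nat /\ Rabs (un (g N k) - l) < / (INR k + 1)).
  { intros; unfold g; destruct constructive_indefinite_description; auto. }
  exists (iter_sub g). split.
  - intros k. simpl. destruct (Hg (S (iter_sub g k)) (S k)). lia.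
  - apply CV_Cauchy. exists l. intros eps He.
    destruct (small_inv eps He) as [N HN]. exists N. intros k Hk. unfold R_dist.
    assert (Hk' : Rabs (un (iter_sub g k) - l) < / (INR k + 1)).
    { destruct k; simpl; apply Hg. }
    eapply Rlt_le_trans. apply Hk'. eapply Rle_trans. 2: left; apply HN.
    apply Rinv_le_contravar. pose proof (pos_INR N); lra. apply le_INR in Hk. lra.
Qed.

Fixpoint psi (E : (nat -> nat) -> nat -> nat -> nat) (i : nat) : nat -> nat :=
  match i with O => fun j => j | S i' => fun j => psi E i' (E (psi E i') i' j) end.

Lemma diag (a : nat -> nat -> R) (K : nat -> R) : (forall i j, Rabs (a i j) <= K i) ->
  exists phi, st_incr phi /\ forall i, Cauchy_crit (fun j => a i (phi j)).
Proof.
  intros Hb.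
  assert (H : forall (ps : nat -> nat) i, exists th, st_incr th /\ Cauchy_crit (fun j => a i (ps (th j)))).
  { intros ps i. apply (bw_sub (fun j => a i (ps j)) (K i)). intros; apply Hb. }
  set (E := fun ps i => proj1_sig (constructive_indefinite_description _ (H ps i))).
  assert (HE : forall ps i, st_incr (E ps i) /\ Cauchy_crit (fun j => a i (ps (E ps i j)))).
  { intros; unfold E; destruct constructive_indefinite_description; auto. }
  assert (Pinc : forall i, st_incr (psi E i)).
  { induction i; intros k; simpl. lia. apply st_incr_lt; auto. apply HE. }
  assert (Prange : forall i d j, exists s, (j <= s)%nat /\ psi E (d + i)%nat j = psi E i s).
  { intros i d; induction d; intros j. exists j; split; auto.
    simpl. destruct (IHd (E (psi E (d + i)%nat) (d + i)%nat j)) as [s [Hs1 Hs2]].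
    exists s; split; auto. pose proof (st_incr_ge _ (proj1 (HE (psi E (d + i)%nat) (d + i)%nat)) j). lia. }
  exists (fun j => psi E (S j) j). split.
  - intros j. simpl. set (th := E (psi E j) j).
    change (psi E j (th j) < psi E (S j) (E (psi E (S j)) (S j) (S j)))%nat.
    simpl. fold th.
    pose proof (st_incr_ge _ (proj1 (HE (psi E (S j)) (S j))) (S j)) as G.
    set (t2 := E (psi E (S j)) (S j) (S j)) in *.
    change (psi E (S j) t2) with (psi E j (th t2)).
    assert (th j < th t2)%nat.
    { assert (Hth : st_incr th) by apply HE.
      pose proof (st_incr_mono th Hth (S j) t2 G). specialize (Hth j). lia. }
    pose proof (st_incr_mono _ (Pinc j) (S (th j)) (th t2) H0). specialize (Pinc j (th j)). unfold t2, th in *; simpl in *; lia.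
  - intros i eps He. destruct (proj2 (HE (psi E i) i) eps He) as [N HN].
    exists (max N i). intros n m Hn Hm.
    destruct (Prange (S i) (n - i)%nat n) as [s [Hs1 Hs2]].
    destruct (Prange (S i) (m - i)%nat m) as [s' [Hs1' Hs2']].
    replace (n - i + S i)%nat with (S n) in Hs2 by lia.
    replace (m - i + S i)%nat with (S m) in Hs2' by lia.
    rewrite Hs2, Hs2'. simpl. apply HN; lia.
Qed.


Lemma floor_nat y N : 0 <= y <= INR N -> exists k, (k <= N)%nat /\ INR k <= y <= INR k + 1.
Proof.
  induction N; intros Hy. exists 0%nat; simpl in *; split; [lia|lra].
  destruct (Rle_dec y (INR N)).
  - destruct IHN as [k [Hk Hk']]. lra. exists k; split; [lia|lra].
  - exists N. split. lia. rewrite S_INR in Hy. lra.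
Qed.

Lemma grid x l : in01 x -> exists k, (k <= S l)%nat /\ in01 (INR k / INR (S l)) /\
  Rabs (x - INR k / INR (S l)) <= / INR (S l).
Proof.
  intros Hx. assert (HL : 0 < INR (S l)) by (apply lt_0_INR; lia).
  destruct (floor_nat (x * INR (S l)) (S l)) as [k [Hk Hk']].
  { unfold in01 in Hx. split. apply Rmult_le_pos; lra. nra. }
  exists k. split; auto. split.
  - unfold in01. split. unfold Rdiv; apply Rle_mult_inv_pos. apply pos_INR. auto.
    apply (Rmult_le_reg_r (INR (S l))); auto. unfold Rdiv. rewrite Rmult_assoc, Rinv_l by lra.
    rewrite Rmult_1_r, Rmult_1_l. apply le_INR; auto.
  - apply Rabs_le. split.
    + apply (Rmult_le_reg_r (INR (S l))); auto.
      replace ((x - INR k / INR (S l)) * INR (S l)) with (x * INR (S l) - INR k) by (field; lra).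
      replace (- / INR (S l) * INR (S l)) with (-1) by (field; lra). lra.
    + apply (Rmult_le_reg_r (INR (S l))); auto.
      replace ((x - INR k / INR (S l)) * INR (S l)) with (x * INR (S l) - INR k) by (field; lra).
      replace (/ INR (S l) * INR (S l)) with 1 by (field; lra). lra.
Qed.

Lemma finite_max (P : nat -> nat -> Prop) n :
  (forall k N N', (N <= N')%nat -> P k N -> P k N') ->
  (forall k, (k <= n)%nat -> exists N, P k N) -> exists N, forall k, (k <= n)%nat -> P k N.
Proof.
  intros Hm H. induction n.
  - destruct (H 0%nat (le_n 0)) as [N HN]. exists N. intros k Hk. replace k with 0%nat by lia. auto.
  - destruct IHn as [N1 H1]. intros; apply H; lia.
    destruct (H (S n) (le_n _)) as [N2 H2]. exists (max N1 N2). intros k Hk.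
    destruct (Nat.eq_dec k (S n)) as [->|]. apply (Hm _ N2); auto; lia.
    apply (Hm _ N1); auto. lia. apply H1; lia.
Qed.

Lemma le_eps a b : (forall d, d > 0 -> a < b + d) -> a <= b.
Proof. intros H. apply Rnot_lt_le. intros Hlt. specialize (H ((a - b)/2)). lra. Qed.

Definition pt (p : nat) : R := let (k, l) := of_nat p in clamp (INR k / INR (S l)).

Lemma AA (U : nat -> nat -> R -> R) (B : nat -> R) :
  (forall j m x, in01 x -> Rabs (U j m x) <= B m) ->
  (forall j m x y, in01 x -> in01 y -> Rabs (U j m x - U j m y) <= B (S m) * Rabs (x - y)) ->
  exists phi V, st_incr phi /\
    forall m eps, eps > 0 -> exists N, forall j, (N <= j)%nat -> forall x, in01 x ->
      Rabs (U (phi j) m x - V m x) <= eps.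
Proof.
  intros Hb Hl.
  set (a := fun i j => U j (fst (of_nat i)) (pt (snd (of_nat i)))).
  destruct (diag a (fun i => B (fst (of_nat i)))) as [phi [Hphi Hc]].
  { intros i j. unfold a, pt. destruct (of_nat (snd (of_nat i))). apply Hb, clamp_in. }
  assert (Bpos : forall m, 0 <= B m).
  { intros m. specialize (Hb 0%nat m 0 ltac:(red; lra)). pose proof (Rabs_pos (U 0%nat m 0)). lra. }
  assert (UC : forall m eps, eps > 0 -> exists N, forall j j', (N <= j)%nat -> (N <= j')%nat ->
       forall x, in01 x -> Rabs (U (phi j) m x - U (phi j') m x) < eps).
  { intros m eps He.
    assert (He3 : eps / (3 * (B (S m) + 1)) > 0).
    { apply Rdiv_lt_0_compat. lra. specialize (Bpos (S m)). lra. }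
    destruct (small_inv _ He3) as [l Hl'].
    rewrite <- S_INR in Hl'.
    destruct (finite_max (fun k N => forall j j', (N <= j)%nat -> (N <= j')%nat ->
         Rabs (U (phi j) m (INR k / INR (S l)) - U (phi j') m (INR k / INR (S l))) < eps / 3) (S l))
      as [N HN].
    - intros k N N' HNN' HP j j' Hj Hj'. apply HP; lia.
    - intros k Hk. assert (He' : eps / 3 > 0) by lra.
      destruct (Hc (to_nat (m, to_nat (k, l))) (eps/3) He') as [N HN].
      exists N. intros j j' Hj Hj'. specialize (HN j j' Hj Hj'). unfold a, R_dist, pt in HN.
      rewrite !cancel_of_to in HN. cbn [fst snd] in HN. rewrite !cancel_of_to in HN.
      assert (in01 (INR k / INR (S l))).
      { unfold in01. split. unfold Rdiv; apply Rle_mult_inv_pos. apply pos_INR. apply lt_0_INR; lia.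
        assert (HL : 0 < INR (S l)) by (apply lt_0_INR; lia).
        apply (Rmult_le_reg_r (INR (S l))); auto. unfold Rdiv. rewrite Rmult_assoc, Rinv_l by lra.
        rewrite Rmult_1_r, Rmult_1_l. apply le_INR; auto. }
      rewrite clamp_id in HN; auto.
    - exists N. intros j j' Hj Hj' x Hx.
      destruct (grid x l Hx) as [k [Hk [Hp Hd]]].
      set (p := INR k / INR (S l)) in *.
      specialize (HN k Hk j j' Hj Hj'). fold p in HN.
      pose proof (Hl (phi j) m x p Hx Hp) as L1. pose proof (Hl (phi j') m p x Hp Hx) as L2.
      rewrite (Rabs_minus_sym p x) in L2.
      assert (Hbd : B (S m) * Rabs (x - p) <= eps / 3).
      { eapply Rle_trans. apply Rmult_le_compat_l. apply Bpos. apply Hd.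
        left. apply (Rle_lt_trans _ (B (S m) * (eps / (3 * (B (S m) + 1))))).
        apply Rmult_le_compat_l. apply Bpos. left; auto.
        specialize (Bpos (S m)).
        replace (B (S m) * (eps / (3 * (B (S m) + 1)))) with ((eps / 3) * (B (S m) / (B (S m) + 1))) by (field; lra).
        assert (B (S m) / (B (S m) + 1) < 1).
        { apply (Rmult_lt_reg_r (B (S m) + 1)). lra. unfold Rdiv. rewrite Rmult_assoc, Rinv_l; lra. }
        assert (0 < eps / 3) by lra. nra. }
      replace (U (phi j) m x - U (phi j') m x) with
        ((U (phi j) m x - U (phi j) m p) + (U (phi j) m p - U (phi j') m p) + (U (phi j') m p - U (phi j') m x)) by ring.
      eapply Rle_lt_trans. apply Rabs_triang. eapply Rle_lt_trans. apply Rplus_le_compat_r. apply Rabs_triang.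
      lra. }
  assert (HC : forall m x, Cauchy_crit (fun j => U (phi j) m (clamp x))).
  { intros m x eps He. destruct (UC m eps He) as [N HN]. exists N. intros n n' Hn Hn'.
    unfold R_dist. apply HN; auto. apply clamp_in. }
  exists phi, (fun m x => proj1_sig (Rcomplete.R_complete _ (HC m x))). split; auto.
  intros m eps He. destruct (UC m eps He) as [N HN]. exists N. intros j Hj x Hx.
  destruct (Rcomplete.R_complete _ (HC m x)) as [c Hcv]. simpl.
  apply le_eps. intros d Hd.
  destruct (Hcv d Hd) as [N' HN']. specialize (HN' (max N N') ltac:(lia)).
  unfold R_dist in HN'. rewrite clamp_id in HN' by auto.
  specialize (HN j (max N N') Hj ltac:(lia) x Hx).
  replace (U (phi j) m x - c) with ((U (phi j) m x - U (phi (max N N')) m x) + (U (phi (max N N')) m x - c)) by ring.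
  eapply Rle_lt_trans. apply Rabs_triang. lra.
Qed.


Notation f_ k := (INR (fact k)).

Lemma fact_pos' k : 0 < f_ k.
Proof. apply lt_0_INR, lt_O_fact. Qed.

Lemma fact_mul_le a b : f_ a * f_ b <= f_ (a + b).
Proof.
  induction a. simpl. lra.
  replace (S a + b)%nat with (S (a + b)) by lia. rewrite !fact_simpl, !mult_INR.
  pose proof (fact_pos' a); pose proof (fact_pos' b); pose proof (fact_pos' (a+b)).
  assert (INR (S a) <= INR (S (a + b))) by (apply le_INR; lia).
  pose proof (pos_INR (S a)).
  apply Rle_trans with (INR (S a) * f_ (a + b)). rewrite Rmult_assoc. apply Rmult_le_compat_l; auto.
  apply Rmult_le_compat_r; lra.
Qed.

Definition Bf (s r Cf : R) (k : nat) : R := Cf * f_ k ^ 2 * (r / s) ^ k.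
Definition wt (s r Cf : R) (n k : nat) : R := / (1 - r) * (bin n k ^ 2 * Bf s r Cf k ^ 2 / r ^ k).
Definition ee (s : R) (m : nat) : R := match m with O => 1 | S m' => coef s m' end.
Definition Kc (s r Cf : R) : R := Cf ^ 2 / (1 - r) * (1 + / s + s ^ 2 + s).

Lemma wt_eq s r Cf k m : 0 < s -> 0 < r < 1 ->
  coef s (k + m) * wt s r Cf (k + m) k =
  Cf ^ 2 / (1 - r) * r ^ k * s ^ (2 * m) * f_ k ^ 2 / (f_ (S (k + m)) ^ 2 * f_ m ^ 2).
Proof.
  intros Hs Hr. unfold coef, wt, Bf.
  pose proof (bin_fact (k + m) k ltac:(lia)) as Hb. replace (k + m - k)%nat with m in Hb by lia.
  assert (Eb : bin (k + m) k = f_ (k + m) / (f_ k * f_ m)).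
  { pose proof (fact_pos' k); pose proof (fact_pos' m). rewrite <- Hb. field. lra. }
  rewrite Eb. replace (2 * (k + m))%nat with (k + k + (m + m))%nat by lia.
  replace (2 * m)%nat with (m + m)%nat by lia.
  rewrite !pow_add.
  pose proof (fact_pos' k); pose proof (fact_pos' m); pose proof (fact_pos' (k+m)); pose proof (fact_pos' (S (k+m))).
  assert (0 < s ^ k) by (apply pow_lt; lra). assert (0 < s ^ m) by (apply pow_lt; lra).
  assert (0 < r ^ k) by (apply pow_lt; lra).
  assert (Ers : (r / s) ^ k = r ^ k / s ^ k) by (unfold Rdiv; rewrite Rpow_mult_distr, pow_inv; reflexivity). rewrite Ers. field. repeat split; lra.
Qed.

Lemma weight s r Cf k m : 0 < s -> 0 < r < 1 -> 0 < Cf ->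
  coef s (k + m) * (1 + INR (k + m) / s) * wt s r Cf (k + m) k <=
  Kc s r Cf * r ^ k * ee s m / (INR (k + m) + 1).
Proof.
  intros Hs Hr HC.
  replace (coef s (k + m) * (1 + INR (k + m) / s) * wt s r Cf (k + m) k) with
    ((1 + INR (k + m) / s) * (coef s (k + m) * wt s r Cf (k + m) k)) by ring.
  rewrite wt_eq by auto. unfold Kc.
  assert (0 < r ^ k) by (apply pow_lt; lra).
  assert (HC2 : 0 < Cf ^ 2 / (1 - r)) by (apply Rdiv_lt_0_compat; [apply pow_lt|]; lra).
  set (A := Cf ^ 2 / (1 - r)) in *.
  pose proof (pos_INR (k + m)) as Hn.
  destruct m as [|m'].
  - replace (k + 0)%nat with k in * by lia. simpl ee. simpl pow at 2. replace (f_ 0) with 1 by reflexivity.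
    rewrite fact_simpl, mult_INR, S_INR. pose proof (fact_pos' k).
    set (F := f_ k) in *. set (N := INR k) in *. set (R := r ^ k) in *.
    replace (A * R * 1 * F ^ 2 / (((N + 1) * F) ^ 2 * 1 ^ 2)) with (A * R / (N + 1) ^ 2)
      by (simpl; field; lra).
    apply Rle_trans with (A * R * (1 + / s + s ^ 2 + s) * 1 / (N + 1)); [|right; field; lra].
    replace ((1 + N / s) * (A * R / (N + 1) ^ 2)) with ((A * R) * ((1 + N / s) / (N + 1)) / (N + 1))
      by (field; lra).
    apply Rmult_le_compat_r. left; apply Rinv_0_lt_compat; lra.
    rewrite Rmult_1_r. apply Rmult_le_compat_l. nra.
    apply (Rmult_le_reg_r (N + 1)). lra. unfold Rdiv. rewrite Rmult_assoc, Rinv_l by lra.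
    assert (0 < / s) by (apply Rinv_0_lt_compat; lra).
    assert (0 < s ^ 2) by (apply pow_lt; lra). nra.
  - simpl ee. unfold coef.
    replace (k + S m')%nat with (S (k + m')) by lia.
    rewrite (fact_simpl (S (k + m'))), (fact_simpl (k + m')), !mult_INR.
    rewrite (fact_simpl m'), mult_INR.
    replace (2 * S m')%nat with (S (S (2 * m'))) by lia.
    pose proof (fact_mul_le k m') as FM.
    pose proof (fact_pos' k); pose proof (fact_pos' m'); pose proof (fact_pos' (k + m')).
    set (a := f_ k) in *. set (b := f_ m') in *. set (c := f_ (k + m')) in *.
    rewrite !S_INR. set (N := INR (k + m')) in *. pose proof (pos_INR (k + m')) as HN. fold N in HN.
    replace (S (S (2 * m'))) with (2 + 2 * m')%nat by lia. rewrite pow_add.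
    set (T := s ^ (2 * m')). assert (0 < T) by (apply pow_lt; lra).
    set (R := r ^ k) in *.
    set (L := 1 + / s + s ^ 2 + s) in *.
    assert (HL : s * s + s <= L).
    { unfold L. assert (0 < / s) by (apply Rinv_0_lt_compat; lra). simpl. lra. }
    set (d := INR m' + 1). assert (Hd : 1 <= d) by (unfold d; pose proof (pos_INR m'); lra).
    set (Q := (s * s + s * (N + 1)) * (a * b) ^ 2 / ((N + 1 + 1) * (N + 1) ^ 2 * c ^ 2 * L)).
    assert (0 < L) by nra.
    match goal with |- ?lhs <= ?rhs =>
      assert (EQ : lhs = rhs * Q); [unfold Q, d; pose proof (pos_INR m'); field; repeat split; try lra; nra|];
      rewrite EQ; apply Rle_trans with (rhs * 1); [|right; ring] end.
    apply Rmult_le_compat_l.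
    { apply Rmult_le_pos; [|left; apply Rinv_0_lt_compat; lra].
      apply Rmult_le_pos. apply Rmult_le_pos. nra. nra.
      left. apply Rdiv_lt_0_compat. auto. assert (0 < d * b) by nra. apply Rmult_lt_0_compat; apply pow_lt; nra. }
    unfold Q. apply (Rmult_le_reg_r ((N + 1 + 1) * (N + 1) ^ 2 * c ^ 2 * L)).
    { repeat apply Rmult_lt_0_compat; try apply pow_lt; lra. }
    unfold Rdiv. rewrite Rmult_assoc, Rinv_l, Rmult_1_r, Rmult_1_l.
    2:{ apply Rgt_not_eq; unfold Rgt. repeat apply Rmult_lt_0_compat; try apply pow_lt; lra. }
    assert (P1 : (a * b) ^ 2 <= c ^ 2) by (assert (0 <= a * b) by nra; nra).
    assert (P2 : s * s + s * (N + 1) <= L * (N + 1)) by nra.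
    assert (P3 : 0 <= s * s + s * (N + 1)) by nra.
    apply Rle_trans with (L * (N + 1) * c ^ 2).
    { apply Rle_trans with ((s * s + s * (N + 1)) * c ^ 2). apply Rmult_le_compat_l; auto.
      apply Rmult_le_compat_r; nra. }
    assert (0 <= L * (N + 1) * c ^ 2) by (assert (0 < L) by nra; nra).
    replace ((N + 1 + 1) * (N + 1) ^ 2 * c ^ 2 * L) with (L * (N + 1) * c ^ 2 * ((N + 1 + 1) * (N + 1))) by ring.
    assert (1 <= (N + 1 + 1) * (N + 1)) by nra. nra.
Qed.

Lemma CS_sum (b w : nat -> R) n : (forall k, 0 < w k) ->
  (sum_f_R0 b n) ^ 2 <= sum_f_R0 w n * sum_f_R0 (fun k => b k ^ 2 / w k) n.
Proof.
  intros Hw. induction n.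
  - cbn [sum_f_R0]. specialize (Hw 0%nat). replace (w 0%nat * (b 0%nat ^ 2 / w 0%nat)) with (b 0%nat ^ 2) by (field; lra). lra.
  - rewrite !tech5. set (SS := sum_f_R0 b n) in *. set (W := sum_f_R0 w n) in *.
    set (T := sum_f_R0 (fun k => b k ^ 2 / w k) n) in *.
    assert (HW : 0 < W).
    { unfold W. clear -Hw. induction n; simpl. apply Hw. specialize (Hw (S n)). lra. }
    pose proof (Hw (S n)) as Hwn. set (bb := b (S n)) in *. set (ww := w (S n)) in *.
    set (y := bb / ww). replace bb with (ww * y) by (unfold y; field; lra).
    replace ((ww * y) ^ 2 / ww) with (ww * y ^ 2) by (field; lra).
    assert (K : 0 <= W * y ^ 2 + T - 2 * SS * y).
    { assert (E : W * (W * y ^ 2 + T - 2 * SS * y) = (W * y - SS) ^ 2 + (W * T - SS ^ 2)) by ring.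
      assert (0 <= (W * y - SS) ^ 2) by apply pow2_ge_0.
      assert (0 <= W * (W * y ^ 2 + T - 2 * SS * y)) by lra.
      apply (Rmult_le_reg_l W); lra. }
    assert (E2 : (W + ww) * (T + ww * y ^ 2) - (SS + ww * y) ^ 2 =
                 W * T - SS ^ 2 + ww * (W * y ^ 2 + T - 2 * SS * y)) by ring.
    assert (0 <= ww * (W * y ^ 2 + T - 2 * SS * y)) by (apply Rmult_le_pos; lra).
    lra.
Qed.

Lemma geom_le r n : 0 < r < 1 -> sum_f_R0 (fun k => r ^ k) n <= / (1 - r).
Proof.
  intros Hr. rewrite tech3 by lra. unfold Rdiv. rewrite <- (Rmult_1_l (/ (1 - r))) at 2.
  apply Rmult_le_compat_r. left; apply Rinv_0_lt_compat; lra.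
  assert (0 < r ^ S n) by (apply pow_lt; lra). lra.
Qed.

Lemma pointwise s r Cf F Z n x : 0 < s -> 0 < r < 1 ->
  (forall k, Rabs (F k x) <= Bf s r Cf k) ->
  (Leib F Z n x) ^ 2 <= sum_f_R0 (fun k => wt s r Cf n k * Z (n - k)%nat x ^ 2) n.
Proof.
  intros Hs Hr HF. unfold Leib.
  eapply Rle_trans. apply (CS_sum _ (fun k => r ^ k)). intros; apply pow_lt; lra.
  assert (HT : 0 <= sum_f_R0 (fun k => (bin n k * F k x * Z (n - k)%nat x) ^ 2 / r ^ k) n).
  { apply cond_pos_sum. intros k. apply Rmult_le_pos. apply pow2_ge_0.
    left; apply Rinv_0_lt_compat, pow_lt; lra. }
  apply Rle_trans with (/ (1 - r) * sum_f_R0 (fun k => (bin n k * F k x * Z (n - k)%nat x) ^ 2 / r ^ k) n).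
  apply Rmult_le_compat_r; auto. apply geom_le; auto.
  rewrite scal_sum. apply sum_Rle. intros k Hk. unfold wt.
  assert (0 < r ^ k) by (apply pow_lt; lra).
  specialize (HF k). assert (HF2 : F k x ^ 2 <= Bf s r Cf k ^ 2).
  { rewrite <- pow2_abs. apply pow_incr. split. apply Rabs_pos. auto. }
  assert (0 < / (1 - r)) by (apply Rinv_0_lt_compat; lra).
  replace ((bin n k * F k x * Z (n - k)%nat x) ^ 2 / r ^ k * / (1 - r)) with
    (/ (1 - r) * (bin n k ^ 2 / r ^ k * Z (n - k)%nat x ^ 2) * F k x ^ 2) by (field; lra).
  replace (/ (1 - r) * (bin n k ^ 2 * Bf s r Cf k ^ 2 / r ^ k) * Z (n - k)%nat x ^ 2) with
    (/ (1 - r) * (bin n k ^ 2 / r ^ k * Z (n - k)%nat x ^ 2) * Bf s r Cf k ^ 2) by (field; lra).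
  apply Rmult_le_compat_l; auto.
  apply Rmult_le_pos. lra. apply Rmult_le_pos. apply Rmult_le_pos. apply pow2_ge_0.
  left; apply Rinv_0_lt_compat; lra. apply pow2_ge_0.
Qed.

Lemma cont01_Leib F Z n : (forall k, cont01 (F k)) -> (forall m, cont01 (Z m)) -> cont01 (Leib F Z n).
Proof.
  intros HF HZ. unfold Leib. apply (cont01_sum (fun k x => bin n k * F k x * Z (n - k)%nat x)).
  intros. apply cont01_mult; auto. apply cont01_mult; auto. apply cont01_const.
Qed.

Definition En (s : R) (Z : nat -> R -> R) (m : nat) : R :=
  RInt (fun x => Z m x ^ 2) 0 1 + s * Z m 0 ^ 2.

Lemma En_nonneg s Z m : 0 < s -> cont01 (Z m) -> 0 <= En s Z m.
Proof.
  intros Hs HZ. unfold En. apply Rplus_le_le_0_compat.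
  apply RInt_nonneg. lra. apply cont01_ex_RInt; try (red; lra). apply cont01_pow; auto.
  intros; apply pow2_ge_0. apply Rmult_le_pos. lra. apply pow2_ge_0.
Qed.

Lemma coef_pos s n : 0 < s -> 0 < coef s n.
Proof.
  intros Hs. unfold coef. apply Rdiv_lt_0_compat. apply pow_lt; lra.
  apply Rmult_lt_0_compat; apply pow_lt; apply fact_pos'.
Qed.

Lemma main_est s r Cf F Z n : 0 < s -> 0 < r < 1 -> 0 < Cf ->
  (forall k, cont01 (F k)) -> (forall m, cont01 (Z m)) ->
  (forall k x, in01 x -> Rabs (F k x) <= Bf s r Cf k) ->
  coef s n * (1 + INR n / s) * En s (Leib F Z) n <=
  Kc s r Cf / (INR n + 1) * sum_f_R0 (fun k => r ^ k * (ee s (n - k) * En s Z (n - k))) n.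
Proof.
  intros Hs Hr HC HF HZ HB.
  assert (P : En s (Leib F Z) n <= sum_f_R0 (fun k => wt s r Cf n k * En s Z (n - k)%nat) n).
  { unfold En.
    rewrite (sum_eq _ (fun k => wt s r Cf n k * RInt (fun x => Z (n - k)%nat x ^ 2) 0 1
                       + (wt s r Cf n k * Z (n - k)%nat 0 ^ 2) * s)) by (intros; ring).
    rewrite plus_sum, <- scal_sum.
    apply Rplus_le_compat.
    - rewrite (sum_eq (fun k => wt s r Cf n k * RInt (fun x => Z (n - k)%nat x ^ 2) 0 1)
            (fun k => RInt (fun x => wt s r Cf n k * Z (n - k)%nat x ^ 2) 0 1)).
      2:{ intros. symmetry. apply RInt_sc. apply cont01_ex_RInt; try (red; lra). apply cont01_pow; auto. }
      rewrite <- (RInt_sum (fun k x => wt s r Cf n k * Z (n - k)%nat x ^ 2)).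
      2:{ intros. apply cont01_ex_RInt; try (red; lra).
          apply cont01_mult. apply cont01_const. apply cont01_pow; auto. }
      apply RInt_mono. lra. apply cont01_ex_RInt; try (red; lra). apply cont01_pow, cont01_Leib; auto.
      apply ex_RInt_sum. intros. apply cont01_ex_RInt; try (red; lra).
      apply cont01_mult. apply cont01_const. apply cont01_pow; auto.
      intros x Hx. apply pointwise; auto. intros; apply HB; red; lra.
    - apply Rmult_le_compat_l. lra. apply pointwise; auto. intros; apply HB; red; lra. }
  assert (Hc : 0 <= coef s n * (1 + INR n / s)).
  { apply Rmult_le_pos. left; apply coef_pos; auto.
    assert (0 <= INR n / s) by (apply Rle_mult_inv_pos; [apply pos_INR|lra]). lra. }
  eapply Rle_trans. apply Rmult_le_compat_l. apply Hc. apply P.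
  rewrite scal_sum, scal_sum. apply sum_Rle. intros k Hk.
  pose proof (weight s r Cf k (n - k) Hs Hr HC) as W.
  replace (k + (n - k))%nat with n in W by lia.
  pose proof (En_nonneg s Z (n - k) Hs (HZ _)).
  replace (wt s r Cf n k * En s Z (n - k) * (coef s n * (1 + INR n / s))) with
     (coef s n * (1 + INR n / s) * wt s r Cf n k * En s Z (n - k)) by ring.
  replace (r ^ k * (ee s (n - k) * En s Z (n - k)) * (Kc s r Cf / (INR n + 1))) with
     (Kc s r Cf * r ^ k * ee s (n - k) / (INR n + 1) * En s Z (n - k)).
  2:{ pose proof (pos_INR n). field. lra. }
  apply Rmult_le_compat_r; auto.
Qed.


Lemma bd_term_eq s G n : bd_term s G n = s * coef s n * G n 0 ^ 2.
Proof.
  unfold bd_term, coef. rewrite pow_add. simpl (s ^ 1). field.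
  repeat split; apply Rgt_not_eq; try apply pow_lt; apply fact_pos'.
Qed.

Lemma sn_term_RInt s k G n : cont01 (G n) ->
  sn_term s k 0 G n = coef s n * INR n ^ (k + 0) * RInt (fun x => (x / s) ^ k * G n x ^ 2) 0 1.
Proof.
  intros HG. unfold sn_term. rewrite Int01_RInt. reflexivity.
  apply cont01_mult. apply cont01_pow. apply cont01_mult. apply cont01_id. apply cont01_const.
  apply cont01_pow; auto.
Qed.

Lemma sn_term_nonneg s k G n : 0 < s -> cont01 (G n) -> 0 <= sn_term s k 0 G n.
Proof.
  intros Hs HG. rewrite sn_term_RInt by auto.
  apply Rmult_le_pos. apply Rmult_le_pos. left; apply coef_pos; auto. apply pow_le, pos_INR.
  apply RInt_nonneg. lra. apply cont01_ex_RInt; try (red; lra).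
  apply cont01_mult. apply cont01_pow. apply cont01_mult. apply cont01_id. apply cont01_const.
  apply cont01_pow; auto.
  intros x Hx. apply Rmult_le_pos. apply pow_le. apply Rle_mult_inv_pos; lra. apply pow2_ge_0.
Qed.

Lemma sn0_eq s G n : cont01 (G n) -> sn_term s 0 0 G n = coef s n * RInt (fun x => G n x ^ 2) 0 1.
Proof.
  intros HG. rewrite sn_term_RInt by auto. simpl (INR n ^ (0 + 0)).
  rewrite Rmult_1_r. f_equal. apply RInt_ext. intros; simpl; ring.
Qed.

Lemma Yterm_le s G n : 0 < s -> cont01 (G n) ->
  sn_term s 0 0 G n + sn_term s 1 0 G n + bd_term s G n <= coef s n * (1 + INR n / s) * En s G n.
Proof.
  intros Hs HG. rewrite sn0_eq, bd_term_eq, sn_term_RInt by auto. unfold En.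
  pose proof (coef_pos s n Hs). pose proof (pos_INR n).
  assert (Hm : RInt (fun x => (x / s) ^ 1 * G n x ^ 2) 0 1 <= RInt (fun x => / s * G n x ^ 2) 0 1).
  { apply RInt_mono. lra.
    apply cont01_ex_RInt; try (red; lra). apply cont01_mult. apply cont01_pow. apply cont01_mult.
    apply cont01_id. apply cont01_const. apply cont01_pow; auto.
    apply cont01_ex_RInt; try (red; lra). apply cont01_mult. apply cont01_const. apply cont01_pow; auto.
    intros x Hx. apply Rmult_le_compat_r. apply pow2_ge_0. simpl. rewrite Rmult_1_r. unfold Rdiv.
    rewrite <- (Rmult_1_l (/ s)) at 2. apply Rmult_le_compat_r. left; apply Rinv_0_lt_compat; lra. lra. }
  rewrite RInt_sc in Hm. 2:{ apply cont01_ex_RInt; try (red; lra). apply cont01_pow; auto. }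
  simpl (INR n ^ (1 + 0)). rewrite Rmult_1_r.
  assert (0 <= coef s n * INR n) by (apply Rmult_le_pos; lra).
  apply Rle_trans with (coef s n * RInt (fun x => G n x ^ 2) 0 1 + coef s n * INR n * (/ s * RInt (fun x => G n x ^ 2) 0 1) + s * coef s n * G n 0 ^ 2).
  apply Rplus_le_compat_r. apply Rplus_le_compat_l. apply Rmult_le_compat_l; auto.
  match goal with |- ?L <= ?R => assert (E : R - L = coef s n * INR n * G n 0 ^ 2) by (field; lra) end.
  assert (0 <= coef s n * INR n * G n 0 ^ 2) by (apply Rmult_le_pos; auto; apply pow2_ge_0). lra.
Qed.

Lemma Y_partial_le s G N : 0 < s -> (forall n, cont01 (G n)) ->
  Y_partial s G N <= sum_f_R0 (fun n => coef s n * (1 + INR n / s) * En s G n) N.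
Proof.
  intros Hs HG. unfold Y_partial. apply sum_Rle. intros; apply Yterm_le; auto.
Qed.

Lemma term_le_sum (a : nat -> R) n : (forall k, 0 <= a k) -> a n <= sum_f_R0 a n.
Proof.
  intros H. destruct n. simpl; lra. rewrite tech5.
  assert (0 <= sum_f_R0 a n) by (apply cond_pos_sum; auto). lra.
Qed.

Lemma Xterm_ge s D n : 0 < s -> (forall m, cont01 (D m)) ->
  coef s n * En s (dshift D) n <=
  sn_term s 0 0 (dshift D) n + sn_term s 1 0 (dshift D) n + sn_term s 2 0 (dshift D) n + bd_term s (dshift D) n.
Proof.
  intros Hs HD. assert (HG : cont01 (dshift D n)) by apply HD.
  rewrite sn0_eq, bd_term_eq by auto. unfold En.
  pose proof (sn_term_nonneg s 1 (dshift D) n Hs HG). pose proof (sn_term_nonneg s 2 (dshift D) n Hs HG).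
  lra.
Qed.

Lemma X_sum s D M N : 0 < s -> (forall m, cont01 (D m)) -> XnormSq_le s D M ->
  sum_f_R0 (fun n => coef s n * En s (dshift D) n) N <= M.
Proof.
  intros Hs HD HX. eapply Rle_trans. 2: apply (HX N). unfold X_partial. apply sum_Rle.
  intros; apply Xterm_ge; auto.
Qed.

Lemma X_term s D M n : 0 < s -> (forall m, cont01 (D m)) -> XnormSq_le s D M ->
  coef s n * En s (dshift D) n <= M.
Proof.
  intros Hs HD HX. eapply Rle_trans. 2: apply (X_sum s D M n); auto.
  apply (term_le_sum (fun n => coef s n * En s (dshift D) n)). intros k.
  apply Rmult_le_pos. left; apply coef_pos; auto. apply En_nonneg; auto. apply HD.
Qed.


Lemma chasles f a b c : cont01 f -> in01 a -> in01 b -> in01 c ->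
  RInt f a b + RInt f b c = RInt f a c.
Proof.
  intros Hf Ha Hb Hc. apply (RInt_Chasles (V:=R_CompleteNormedModule)); apply cont01_ex_RInt; auto.
Qed.

Lemma RInt_sq_le01 h a b : cont01 h -> in01 a -> in01 b -> a <= b ->
  RInt (fun x => h x ^ 2) a b <= RInt (fun x => h x ^ 2) 0 1.
Proof.
  intros Hh Ha Hb Hab. assert (H2 : cont01 (fun x => h x ^ 2)) by (apply cont01_pow; auto).
  assert (I0 : in01 0) by (red; lra). assert (I1 : in01 1) by (red; lra).
  rewrite <- (chasles _ 0 a 1), <- (chasles _ a b 1); auto.
  assert (0 <= RInt (fun x => h x ^ 2) 0 a).
  { apply RInt_nonneg. red in Ha; lra. apply cont01_ex_RInt; auto. intros; apply pow2_ge_0. }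
  assert (0 <= RInt (fun x => h x ^ 2) b 1).
  { apply RInt_nonneg. red in Hb; lra. apply cont01_ex_RInt; auto. intros; apply pow2_ge_0. }
  lra.
Qed.

Lemma RInt_sq_bound h x : cont01 h -> in01 x -> (RInt h 0 x) ^ 2 <= RInt (fun t => h t ^ 2) 0 1.
Proof.
  intros Hh Hx. assert (I0 : in01 0) by (red; lra). red in Hx.
  eapply Rle_trans. apply RInt_CS; [auto|red; lra|red; lra|lra].
  replace (x - 0) with x by ring.
  assert (0 <= RInt (fun t => h t ^ 2) 0 x).
  { apply RInt_nonneg. lra. apply cont01_ex_RInt; auto. apply cont01_pow; auto. intros; apply pow2_ge_0. }
  apply Rle_trans with (RInt (fun t => h t ^ 2) 0 x). nra.
  apply RInt_sq_le01; auto. lra.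
Qed.

Lemma RInt_sq_bound' h x : cont01 h -> in01 x -> (RInt h x 1) ^ 2 <= RInt (fun t => h t ^ 2) 0 1.
Proof.
  intros Hh Hx. assert (I1 : in01 1) by (red; lra). red in Hx.
  eapply Rle_trans. apply RInt_CS; [auto|red; lra|red; lra|lra].
  assert (0 <= RInt (fun t => h t ^ 2) x 1).
  { apply RInt_nonneg. lra. apply cont01_ex_RInt; [apply cont01_pow; auto|red; lra|red; lra]. intros; apply pow2_ge_0. }
  apply Rle_trans with (RInt (fun t => h t ^ 2) x 1). nra.
  apply RInt_sq_le01; [auto|red; lra|red; lra|lra].
Qed.

Lemma abs_le_sq a : Rabs a <= 1 + a ^ 2.
Proof. unfold Rabs; destruct Rcase_abs; nra. Qed.

Section XFacts.
Variables (s M : R) (u : R -> R) (D : nat -> R -> R).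
Hypothesis Hs : 0 < s.
Hypothesis HC : Cinf01 u D.
Hypothesis Hu1 : u 1 = 0.
Hypothesis HX : XnormSq_le s D M.

Let HD : forall m, cont01 (D m). Proof. intros; eapply Cinf01_cont; eauto. Qed.

Lemma coef0 : coef s 0 = 1.
Proof. unfold coef. simpl. field. Qed.

Lemma int_D1 : RInt (fun t => D 1 t ^ 2) 0 1 <= M.
Proof.
  pose proof (X_term s D M 0 Hs HD HX). rewrite coef0, Rmult_1_l in H. unfold En, dshift in H.
  assert (0 <= s * D 1%nat 0 ^ 2) by (apply Rmult_le_pos; [lra|apply pow2_ge_0]). lra.
Qed.

Lemma poincare x : in01 x -> D 0 x ^ 2 <= RInt (fun t => D 1 t ^ 2) 0 1.
Proof.
  intros Hx. assert (I0 : in01 0) by (red; lra). assert (I1 : in01 1) by (red; lra).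
  pose proof (Cinf01_ftc u D 0 HC x Hx) as A. pose proof (Cinf01_ftc u D 0 HC 1 I1) as B.
  destruct HC as [H0 _]. rewrite H0, Hu1 in B by auto.
  pose proof (chasles (D 1) 0 x 1 (HD 1) I0 Hx I1).
  replace (D 0 x) with (- RInt (D 1) x 1) by lra.
  rewrite <- Rsqr_pow2, <- Rsqr_neg, Rsqr_pow2. apply RInt_sq_bound'; auto.
Qed.

Lemma M_nonneg : 0 <= M.
Proof.
  eapply Rle_trans. 2: apply (X_term s D M 0 Hs HD HX).
  apply Rmult_le_pos. left; apply coef_pos; auto. apply En_nonneg; auto. apply HD.
Qed.

Lemma ee_sum N : sum_f_R0 (fun m => ee s m * En s D m) N <= (2 + s) * M.
Proof.
  pose proof M_nonneg as HM.
  assert (E0 : ee s 0 * En s D 0 <= (1 + s) * M).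
  { simpl ee. rewrite Rmult_1_l. unfold En.
    assert (I0 : in01 0) by (red; lra).
    pose proof (poincare 0 I0). pose proof int_D1.
    assert (RInt (fun x => D 0%nat x ^ 2) 0 1 <= RInt (fun _ => RInt (fun t => D 1 t ^ 2) 0 1) 0 1).
    { apply RInt_mono. lra. apply cont01_ex_RInt; try (red; lra). apply cont01_pow; auto.
      apply cont01_ex_RInt; try (red; lra). apply cont01_const.
      intros; apply poincare; red; lra. }
    rewrite RInt_cst in H1. assert (s * D 0%nat 0 ^ 2 <= s * M) by (apply Rmult_le_compat_l; lra). lra. }
  destruct N. cbn [sum_f_R0]. lra.
  rewrite decomp_sum by lia. simpl pred.
  pose proof (X_sum s D M N Hs HD HX).
  replace (sum_f_R0 (fun i => ee s (S i) * En s D (S i)) N) with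
    (sum_f_R0 (fun n => coef s n * En s (dshift D) n) N) by reflexivity.
  lra.
Qed.

Definition Bs (m : nat) : R :=
  match m with O => 1 + M | S m' => 2 + M / (s * coef s m') + M / coef s (S m') end.

Lemma sup_bound m x : in01 x -> Rabs (D m x) <= Bs m.
Proof.
  intros Hx. destruct m as [|m'].
  - simpl. pose proof (abs_le_sq (D 0 x)). pose proof (poincare x Hx). pose proof int_D1. lra.
  - simpl Bs. rewrite (Cinf01_ftc u D (S m') HC x Hx).
    eapply Rle_trans. apply Rabs_triang.
    pose proof (abs_le_sq (D (S m') 0)). pose proof (abs_le_sq (RInt (D (S (S m'))) 0 x)).
    pose proof (coef_pos s m' Hs). pose proof (coef_pos s (S m') Hs).
    assert (A : D (S m') 0 ^ 2 <= M / (s * coef s m')).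
    { pose proof (X_term s D M m' Hs HD HX). unfold En, dshift in H3.
      assert (0 <= RInt (fun x => D (S m') x ^ 2) 0 1).
      { apply RInt_nonneg. lra. apply cont01_ex_RInt; try (red; lra). apply cont01_pow; auto. intros; apply pow2_ge_0. }
      apply (Rmult_le_reg_l (s * coef s m')). apply Rmult_lt_0_compat; lra.
      replace (s * coef s m' * (M / (s * coef s m'))) with M by (field; lra).
      assert (0 <= coef s m' * RInt (fun x => D (S m') x ^ 2) 0 1) by (apply Rmult_le_pos; lra). nra. }
    assert (B : RInt (D (S (S m'))) 0 x ^ 2 <= M / coef s (S m')).
    { eapply Rle_trans. apply RInt_sq_bound; auto.
      pose proof (X_term s D M (S m') Hs HD HX). unfold En, dshift in H3.
      apply (Rmult_le_reg_l (coef s (S m'))). lra.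
      replace (coef s (S m') * (M / coef s (S m'))) with M by (field; lra).
      assert (0 <= coef s (S m') * (s * D (S (S m')) 0 ^ 2)).
      { apply Rmult_le_pos. lra. apply Rmult_le_pos. lra. apply pow2_ge_0. }
      nra. }
    lra.
Qed.

Lemma lip_bound m x y : in01 x -> in01 y -> Rabs (D m x - D m y) <= Bs (S m) * Rabs (x - y).
Proof.
  intros Hx Hy. assert (I0 : in01 0) by (red; lra).
  rewrite (Cinf01_ftc u D m HC x Hx), (Cinf01_ftc u D m HC y Hy).
  replace (D m 0 + RInt (D (S m)) 0 x - (D m 0 + RInt (D (S m)) 0 y)) with (RInt (D (S m)) y x).
  2:{ pose proof (chasles (D (S m)) 0 y x (HD _) I0 Hy Hx) as Ech. simpl in *. lra. }
  assert (HB : forall t, y <= t <= x \/ x <= t <= y -> Rabs (D (S m) t) <= Bs (S m)).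
  { intros t Ht. apply sup_bound. red in Hx, Hy |- *. lra. }
  destruct (Rle_dec y x).
  - rewrite Rabs_pos_eq with (x := x - y) by lra. rewrite Rmult_comm.
    apply abs_RInt_le_const; auto. apply cont01_ex_RInt; auto.
  - rewrite <- (opp_RInt_swap (V:=R_CompleteNormedModule) (D (S m)) x y). 2: apply cont01_ex_RInt; auto. change (opp (RInt (D (S m)) x y)) with (- RInt (D (S m)) x y). rewrite Rabs_Ropp.
    rewrite (Rabs_minus_sym x y), (Rabs_pos_eq (y - x)) by lra. rewrite Rmult_comm.
    apply abs_RInt_le_const; auto. lra. apply cont01_ex_RInt; auto.
Qed.

End XFacts.


Lemma conv_le (al be : nat -> R) N : (forall k, 0 <= al k) -> (forall k, 0 <= be k) ->
  sum_f_R0 (fun n => sum_f_R0 (fun k => al k * be (n - k)%nat) n) N <= sum_f_R0 al N * sum_f_R0 be N.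
Proof.
  intros Ha Hb. destruct N. simpl. lra.
  rewrite (cauchy_finite al be (S N)) by lia.
  assert (0 <= sum_f_R0 (fun k => sum_f_R0 (fun l => al (S (l + k)) * be (S N - l)%nat) (Init.Nat.pred (S N - k))) (Init.Nat.pred (S N))).
  { apply cond_pos_sum. intros k. apply cond_pos_sum. intros l. apply Rmult_le_pos; auto. }
  lra.
Qed.

Lemma sum_mono_idx (a : nat -> R) p q : (forall k, 0 <= a k) -> (p <= q)%nat -> sum_f_R0 a p <= sum_f_R0 a q.
Proof.
  intros Ha H. induction H. lra. rewrite tech5. specialize (Ha (S m)). lra.
Qed.

Lemma sum_scal_l (g : nat -> R) K N : sum_f_R0 (fun n => K * g n) N = K * sum_f_R0 g N.
Proof. rewrite scal_sum. apply sum_eq. intros; ring. Qed.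

Definition ind (N1 : nat) (e : nat -> R) (m : nat) : R := if Compare_dec.le_dec m N1 then e m else 0.

Lemma ind_sum N1 e N : (forall k, 0 <= e k) -> sum_f_R0 (ind N1 e) N <= sum_f_R0 e N1.
Proof.
  intros He.
  assert (E : sum_f_R0 (ind N1 e) N = sum_f_R0 e (min N N1)).
  { induction N.
    - simpl. unfold ind. destruct Compare_dec.le_dec; [|lia]. replace (min 0 N1) with 0%nat by lia. reflexivity.
    - rewrite tech5, IHN. unfold ind. destruct Compare_dec.le_dec.
      + replace (min (S N) N1) with (S (min N N1)) by lia. rewrite tech5.
        replace (S (min N N1)) with (S N) by lia. reflexivity.
      + replace (min (S N) N1) with (min N N1) by lia. ring. }
  rewrite E. apply sum_mono_idx; auto. lia.
Qed.

Lemma geom_nonneg r n : 0 < r -> 0 <= sum_f_R0 (fun k => r ^ k) n.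
Proof. intros. apply cond_pos_sum. intros; apply pow_le; lra. Qed.

Lemma tail_bound (a e : nat -> R) (r K c A : R) (N N1 : nat) :
  0 < r < 1 -> 0 <= K -> 0 <= c -> (forall m, 0 <= a m) -> (forall m, 0 <= e m) ->
  (forall m, (m <= N1)%nat -> a m <= e m * c) ->
  sum_f_R0 a N <= A ->
  sum_f_R0 (fun n => K / (INR n + 1) * sum_f_R0 (fun k => r ^ k * a (n - k)%nat) n) N
  <= K / (1 - r) * (c * sum_f_R0 e N1 + A / (INR N1 + 1)).
Proof.
  intros Hr HK Hc Ha He Hsm HA.
  set (b := fun m => ind N1 e m * c + a m / (INR N1 + 1)).
  assert (Hb : forall m, 0 <= b m).
  { intros m. unfold b, ind. destruct Compare_dec.le_dec.
    - apply Rplus_le_le_0_compat. apply Rmult_le_pos; auto. apply Rle_mult_inv_pos; auto. pose proof (pos_INR N1); lra.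
    - rewrite Rmult_0_l, Rplus_0_l. apply Rle_mult_inv_pos; auto. pose proof (pos_INR N1); lra. }
  apply Rle_trans with (sum_f_R0 (fun n => K * sum_f_R0 (fun k => r ^ k * b (n - k)%nat) n) N).
  { apply sum_Rle. intros n Hn. unfold Rdiv. rewrite Rmult_assoc. apply Rmult_le_compat_l; auto.
    rewrite scal_sum. apply sum_Rle. intros k Hk.
    assert (0 <= r ^ k) by (apply pow_le; lra).
    rewrite Rmult_assoc. apply Rmult_le_compat_l; auto.
    pose proof (pos_INR n). pose proof (pos_INR N1).
    unfold b, ind. destruct Compare_dec.le_dec.
    - assert (a (n - k)%nat * / (INR n + 1) <= a (n - k)%nat).
      { rewrite <- (Rmult_1_r (a (n - k)%nat)) at 2. apply Rmult_le_compat_l; auto.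
        rewrite <- Rinv_1. apply Rinv_le_contravar; lra. }
      assert (0 <= a (n - k)%nat / (INR N1 + 1)) by (apply Rle_mult_inv_pos; auto; lra).
      specialize (Hsm _ l). lra.
    - rewrite Rmult_0_l, Rplus_0_l. unfold Rdiv. apply Rmult_le_compat_l; auto.
      apply Rinv_le_contravar. lra. assert (N1 < n)%nat by lia. apply lt_INR in H2. lra. }
  rewrite sum_scal_l.
  replace (K / (1 - r) * (c * sum_f_R0 e N1 + A / (INR N1 + 1))) with
    (K * (/ (1 - r) * (c * sum_f_R0 e N1 + A / (INR N1 + 1)))) by (unfold Rdiv; ring).
  apply Rmult_le_compat_l; auto.
  eapply Rle_trans. apply (conv_le (fun k => r ^ k) b N). intros; apply pow_le; lra. auto.
  apply Rmult_le_compat. apply geom_nonneg; lra. apply cond_pos_sum; auto.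
  apply geom_le; auto.
  unfold b. rewrite plus_sum.
  apply Rplus_le_compat.
  - rewrite <- (scal_sum (ind N1 e) N c). apply Rmult_le_compat_l; auto.
    apply ind_sum; auto.
  - unfold Rdiv. rewrite <- scal_sum. rewrite Rmult_comm. apply Rmult_le_compat_r; auto.
    left; apply Rinv_0_lt_compat; pose proof (pos_INR N1); lra.
Qed.

Lemma full_bound (a : nat -> R) (r K A : R) (N : nat) :
  0 < r < 1 -> 0 <= K -> (forall m, 0 <= a m) -> sum_f_R0 a N <= A ->
  sum_f_R0 (fun n => K / (INR n + 1) * sum_f_R0 (fun k => r ^ k * a (n - k)%nat) n) N
  <= K / (1 - r) * A.
Proof.
  intros Hr HK Ha HA.
  apply Rle_trans with (sum_f_R0 (fun n => K * sum_f_R0 (fun k => r ^ k * a (n - k)%nat) n) N).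
  { apply sum_Rle. intros n Hn. apply Rmult_le_compat_r.
    apply cond_pos_sum; intros; apply Rmult_le_pos; auto; apply pow_le; lra.
    unfold Rdiv. rewrite <- (Rmult_1_r K) at 2. apply Rmult_le_compat_l; auto.
    pose proof (pos_INR n). rewrite <- Rinv_1. apply Rinv_le_contravar; lra. }
  rewrite sum_scal_l.
  replace (K / (1 - r) * A) with (K * (/ (1 - r) * A)) by (unfold Rdiv; ring).
  apply Rmult_le_compat_l; auto.
  eapply Rle_trans. apply (conv_le (fun k => r ^ k) a N). intros; apply pow_le; lra. auto.
  apply Rmult_le_compat. apply geom_nonneg; lra. apply cond_pos_sum; auto.
  apply geom_le; auto. auto.
Qed.


Lemma ftc_conv g h : cont01 g -> cont01 h -> (forall x, in01 x -> g x = g 0 + RInt h 0 x) ->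
  forall x, 0 < x < 1 -> derivable_pt_lim g x (h x).
Proof.
  intros Hg Hh E x Hx.
  set (hc := fun t => h (clamp t)).
  assert (Hc : forall t, continuous hc t) by (intros; apply cont_clamp; auto).
  assert (DI : forall t, is_derive (fun s => RInt hc 0 s) t (hc t)).
  { intros t. apply (is_derive_RInt (V:=R_CompleteNormedModule) hc _ 0); auto. apply filter_forall. intros s.
    apply (RInt_correct (V:=R_CompleteNormedModule)). apply (ex_RInt_continuous (V:=R_CompleteNormedModule)); auto. }
  apply (deriv_local (fun t => g 0 + RInt hc 0 t)); auto.
  - intros t Ht. rewrite (E t) by (red; lra). f_equal. symmetry. apply (RInt_ext (V:=R_CompleteNormedModule)).
    intros y Hy. unfold hc. rewrite clamp_id; auto. unfold Rmin, Rmax in Hy; destruct Rle_dec; red; lra.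
  - replace (h x) with (0 + hc x). 2:{ unfold hc. rewrite clamp_id; [ring|red; lra]. }
    apply derivable_pt_lim_plus. apply derivable_pt_lim_const. apply is_derive_Reals; auto.
Qed.

Lemma lip_cont01 g L : (forall x y, in01 x -> in01 y -> Rabs (g x - g y) <= L * Rabs (x - y)) -> cont01 g.
Proof.
  intros H x Hx eps He. exists (eps / (Rabs L + 1)). split.
  apply Rdiv_lt_0_compat; auto. pose proof (Rabs_pos L); lra.
  intros t [Ht Htx]. simpl in *. unfold Rdist in *. specialize (H t x Ht Hx).
  pose proof (Rabs_pos L). pose proof (Rabs_pos (t - x)).
  apply Rle_lt_trans with (Rabs L * Rabs (t - x)).
  eapply Rle_trans. apply H. apply Rmult_le_compat_r. auto. apply Rle_abs.
  apply Rle_lt_trans with (Rabs L * (eps / (Rabs L + 1))).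
  apply Rmult_le_compat_l; lra.
  replace (Rabs L * (eps / (Rabs L + 1))) with (eps * (Rabs L / (Rabs L + 1))) by (field; lra).
  assert (Rabs L / (Rabs L + 1) < 1).
  { apply (Rmult_lt_reg_r (Rabs L + 1)). lra. unfold Rdiv. rewrite Rmult_assoc, Rinv_l; lra. }
  nra.
Qed.

Lemma En_ext s A B m : (forall x, in01 x -> A m x = B m x) -> En s A m = En s B m.
Proof.
  intros E. unfold En. rewrite (E 0) by (red; lra).
  replace (RInt (fun x => A m x ^ 2) 0 1) with (RInt (fun x => B m x ^ 2) 0 1). reflexivity.
  apply (RInt_ext (V:=R_CompleteNormedModule)). intros x Hx.
  unfold Rmin, Rmax in Hx; destruct Rle_dec; try lra. rewrite E; auto. red; lra.
Qed.

Lemma En_split2 s A B m : 0 < s -> cont01 (A m) -> cont01 (B m) ->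
  En s (fun m x => A m x - B m x) m <= 2 * En s A m + 2 * En s B m.
Proof.
  intros Hs HA HB. unfold En.
  assert (I : RInt (fun x => (A m x - B m x) ^ 2) 0 1 <= RInt (fun x => 2 * A m x ^ 2 + 2 * B m x ^ 2) 0 1).
  { apply RInt_mono. lra. apply cont01_ex_RInt; try (red; lra). apply cont01_pow, cont01_minus; auto.
    apply cont01_ex_RInt; try (red; lra). apply cont01_plus; apply cont01_mult; try apply cont01_const; apply cont01_pow; auto.
    intros. assert (0 <= (A m x + B m x) ^ 2) by apply pow2_ge_0. nra. }
  rewrite RInt_add, RInt_sc, RInt_sc in I.
  2,3: apply cont01_ex_RInt; try (red; lra); apply cont01_pow; auto.
  2,3: apply cont01_ex_RInt; try (red; lra); apply cont01_mult; try apply cont01_const; apply cont01_pow; auto.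
  assert (s * (A m 0 - B m 0) ^ 2 <= s * (2 * A m 0 ^ 2 + 2 * B m 0 ^ 2)).
  { apply Rmult_le_compat_l. lra. assert (0 <= (A m 0 + B m 0) ^ 2) by apply pow2_ge_0. nra. }
  lra.
Qed.

Lemma En_small s Z m d : 0 < s -> cont01 (Z m) -> (forall x, in01 x -> Rabs (Z m x) <= d) ->
  En s Z m <= (1 + s) * d ^ 2.
Proof.
  intros Hs HZ Hd. unfold En.
  assert (Sq : forall x, in01 x -> Z m x ^ 2 <= d ^ 2).
  { intros x Hx. rewrite <- pow2_abs. apply pow_incr. split. apply Rabs_pos. auto. }
  assert (I : RInt (fun x => Z m x ^ 2) 0 1 <= RInt (fun _ => d ^ 2) 0 1).
  { apply RInt_mono. lra. apply cont01_ex_RInt; try (red; lra). apply cont01_pow; auto.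
    apply cont01_ex_RInt; try (red; lra). apply cont01_const.
    intros; apply Sq; red; lra. }
  rewrite RInt_cst in I. assert (I0 : in01 0) by (red; lra). specialize (Sq 0 I0).
  assert (s * Z m 0 ^ 2 <= s * d ^ 2) by (apply Rmult_le_compat_l; lra). lra.
Qed.

Lemma ee_nonneg s m : 0 < s -> 0 <= ee s m.
Proof. intros. destruct m; simpl. lra. left; apply coef_pos; auto. Qed.

Lemma Cinf01_ext g g' D : (forall x, in01 x -> g x = g' x) -> Cinf01 g D -> Cinf01 g' D.
Proof. intros E [A [B C]]. split; auto. intros x Hx. rewrite A, E; auto. Qed.


Theorem mainTheorem5 (sigma sigma' : R) (f : R -> R) :
  0 < sigma -> sigma < sigma' -> gevrey f sigma' 2 ->
  forall (u : nat -> R -> R) (Du : nat -> nat -> R -> R) (M : R),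
    (forall j, inX sigma (u j) (Du j)) ->
    (forall j, XnormSq_le sigma (Du j) M) ->
    exists phi : nat -> nat,
      (forall j, (phi j < phi (S j))%nat) /\
      exists (v : R -> R) (Dv : nat -> R -> R),
        inY sigma v Dv /\
        (forall j, exists W, Cinf01 (fun x => f x * u (phi j) x - v x) W) /\
        (forall eps, eps > 0 -> exists N : nat, forall j, (N <= j)%nat ->
           forall W, Cinf01 (fun x => f x * u (phi j) x - v x) W ->
             YnormSq_le sigma W eps).
Proof.
  intros Hs Hss Hf u Du M Hin HM.
  destruct Hf as [F [HF [C [HC HFb]]]].
  set (r := sigma / sigma').
  assert (Hr : 0 < r < 1).
  { unfold r. split. apply Rdiv_lt_0_compat; lra.
    apply (Rmult_lt_reg_r sigma'). lra. unfold Rdiv. rewrite Rmult_assoc, Rinv_l; lra. }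
  assert (HFc : forall k, cont01 (F k)) by (intros; eapply Cinf01_cont; eauto).
  assert (HB : forall k x, in01 x -> Rabs (F k x) <= Bf sigma r C k).
  { intros k. apply cont01_bound; auto. intros t Ht.
    replace (Bf sigma r C k) with (C / sigma' ^ k * INR (fact k) ^ 2). apply HFb; auto.
    unfold Bf, r. replace (sigma / sigma' / sigma) with (/ sigma') by (field; lra).
    rewrite pow_inv. field. apply pow_nonzero. lra. }
  assert (HCi : forall j, Cinf01 (u j) (Du j)) by (intros j; apply (Hin j)).
  assert (Hu1 : forall j, u j 1 = 0) by (intros j; apply (Hin j)).
  assert (HDc : forall j m, cont01 (Du j m)) by (intros; eapply Cinf01_cont; eauto).
  destruct (AA Du (Bs sigma M)) as [phi [V [Hphi HUV]]].
  { intros j m x Hx. eapply sup_bound; eauto. }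
  { intros j m x y Hx Hy. eapply lip_bound; eauto. }
  assert (HVlip : forall m x y, in01 x -> in01 y -> Rabs (V m x - V m y) <= Bs sigma M (S m) * Rabs (x - y)).
  { intros m x y Hx Hy. apply le_eps. intros d Hd.
    destruct (HUV m (d / 4) ltac:(lra)) as [N HN].
    pose proof (HN N (le_n N) x Hx). pose proof (HN N (le_n N) y Hy).
    pose proof (lip_bound sigma M (u (phi N)) (Du (phi N)) Hs (HCi _) (Hu1 _) (HM _) m x y Hx Hy).
    replace (V m x - V m y) with ((Du (phi N) m x - Du (phi N) m y) - (Du (phi N) m x - V m x) + (Du (phi N) m y - V m y)) by ring.
    eapply Rle_lt_trans. apply Rabs_triang. eapply Rle_lt_trans. apply Rplus_le_compat_r. apply Rabs_triang.
    rewrite Rabs_Ropp. lra. }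
  assert (HVc : forall m, cont01 (V m)) by (intros m; eapply lip_cont01; apply HVlip).
  assert (HVftc : forall m x, in01 x -> V m x = V m 0 + RInt (V (S m)) 0 x).
  { intros m x Hx. assert (I0 : in01 0) by (red; lra).
    apply Rminus_diag_uniq. apply Rabs_eq_0.
    apply Rle_antisym; [|apply Rabs_pos]. apply le_eps. intros d Hd. rewrite Rplus_0_l.
    destruct (HUV m (d / 4) ltac:(lra)) as [N1 HN1].
    destruct (HUV (S m) (d / 4) ltac:(lra)) as [N2 HN2].
    set (j := max N1 N2).
    pose proof (HN1 j ltac:(lia) x Hx). pose proof (HN1 j ltac:(lia) 0 I0).
    pose proof (Cinf01_ftc (u (phi j)) (Du (phi j)) m (HCi _) x Hx) as Ef.
    assert (Hint : Rabs (RInt (Du (phi j) (S m)) 0 x - RInt (V (S m)) 0 x) <= d / 4).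
    { rewrite <- (RInt_minus (V:=R_CompleteNormedModule)).
      2,3: apply cont01_ex_RInt; auto.
      red in Hx. apply Rle_trans with ((x - 0) * (d / 4)).
      apply abs_RInt_le_const. lra. apply (ex_RInt_minus (V:=R_CompleteNormedModule)); apply cont01_ex_RInt; auto.
      intros t Ht. apply HN2. lia. red; lra.
      nra. }
    replace (V m x - (V m 0 + RInt (V (S m)) 0 x)) with
      (- (Du (phi j) m x - V m x) + (Du (phi j) m 0 - V m 0) + (RInt (Du (phi j) (S m)) 0 x - RInt (V (S m)) 0 x)).
    2:{ rewrite Ef. ring. }
    eapply Rle_lt_trans. apply Rabs_triang. eapply Rle_lt_trans. apply Rplus_le_compat_r. apply Rabs_triang.
    rewrite Rabs_Ropp. lra. }
  assert (HVC : Cinf01 (V 0%nat) V).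
  { split; [|split]. intros; reflexivity.
    intros n x Hx. apply ftc_conv; auto.
    intros n x Hx; apply HVc; auto. }
  set (v := fun x => f x * V 0%nat x).
  set (Dv := Leib F V).
  assert (HvC : Cinf01 v Dv) by (apply Leib_Cinf; auto).
  set (AV := 2 * ((2 + sigma) * M) + 1).
  assert (HAV : forall N, sum_f_R0 (fun m => ee sigma m * En sigma V m) N <= AV).
  { intros N. set (Se := sum_f_R0 (ee sigma) N).
    assert (HSe : 0 <= Se) by (apply cond_pos_sum; intros; apply ee_nonneg; auto).
    set (d := / (2 * (1 + sigma) * Se + 1)).
    assert (Hd : 0 < d <= 1).
    { unfold d. split. apply Rinv_0_lt_compat. nra. rewrite <- Rinv_1. apply Rinv_le_contravar; nra. }
    assert (Hd2 : 2 * (1 + sigma) * Se * d <= 1).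
    { unfold d. apply (Rmult_le_reg_r (2 * (1 + sigma) * Se + 1)). nra.
      rewrite Rmult_assoc, Rinv_l by nra. nra. }
    destruct (finite_max (fun m J => forall j, (J <= j)%nat -> forall x, in01 x -> Rabs (Du (phi j) m x - V m x) <= d) N)
      as [J HJ].
    { intros k J J' HJJ P j Hj. apply P. lia. }
    { intros k Hk. apply HUV. lra. }
    assert (HM0 : 0 <= M) by (eapply (M_nonneg sigma M (u (phi J)) (Du (phi J))); eauto).
    pose proof (ee_sum sigma M (u (phi J)) (Du (phi J)) Hs (HCi _) (Hu1 _) (HM _) N) as EU.
    apply Rle_trans with (sum_f_R0 (fun m => 2 * (ee sigma m * En sigma (Du (phi J)) m) + (2 * (1 + sigma) * d ^ 2) * ee sigma m) N).
    { apply sum_Rle. intros m Hm.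
      rewrite (En_ext sigma V (fun m x => Du (phi J) m x - (Du (phi J) m x - V m x)) m) by (intros; ring).
      pose proof (En_split2 sigma (Du (phi J)) (fun m x => Du (phi J) m x - V m x) m Hs (HDc _ _)
        (cont01_minus _ _ (HDc _ _) (HVc _))).
      pose proof (En_small sigma (fun m x => Du (phi J) m x - V m x) m d Hs (cont01_minus _ _ (HDc _ _) (HVc _))
        (HJ m Hm J (le_n _))).
      pose proof (ee_nonneg sigma m Hs). nra. }
    rewrite plus_sum, sum_scal_l, sum_scal_l. fold Se.
    assert (d ^ 2 <= d) by nra. unfold AV. nra. }
  set (Kr := Kc sigma r C / (1 - r)).
  assert (HKc : 0 <= Kc sigma r C).
  { unfold Kc. apply Rmult_le_pos. apply Rle_mult_inv_pos. apply pow_le; lra. lra.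
    assert (0 < / sigma) by (apply Rinv_0_lt_compat; lra). nra. }
  assert (HKr : 0 <= Kr) by (apply Rle_mult_inv_pos; lra).
  exists phi. split; [exact Hphi|]. exists v, Dv. split; [|split].
  -
    split; auto. exists (Kr * AV). intros N.
    eapply Rle_trans. apply Y_partial_le; auto. intros n; eapply Cinf01_cont; eauto.
    eapply Rle_trans. apply sum_Rle. intros n Hn. apply (main_est sigma r C F V n); auto.
    unfold Kr. apply (full_bound (fun m => ee sigma m * En sigma V m)); auto. intros m. apply Rmult_le_pos. apply ee_nonneg; auto. apply En_nonneg; auto.
  - intros j. exists (Leib F (fun m x => Du (phi j) m x - V m x)).
    apply (Cinf01_ext (fun x => f x * (u (phi j) x - V 0%nat x))).
    { intros; unfold v; ring. }
    apply Leib_Cinf; auto. split; [|split].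
    + intros x Hx. destruct (HCi (phi j)) as [A _]. rewrite A; auto.
    + intros n x Hx. apply derivable_pt_lim_minus. apply (HCi (phi j)); auto. apply HVC; auto.
    + intros n x Hx. apply cont01_minus; auto.
  - intros eps He.
    set (AW := 2 * ((2 + sigma) * M) + 2 * AV).
    assert (HM0 : 0 <= M) by (eapply (M_nonneg sigma M (u (phi 0%nat)) (Du (phi 0%nat))); eauto).
    assert (HAW : 0 <= AW) by (unfold AW, AV; nra).
    destruct (small_inv (eps / (2 * (Kr + 1) * (AW + 1)))) as [N1 HN1].
    { apply Rdiv_lt_0_compat. lra. nra. }
    set (S1 := sum_f_R0 (ee sigma) N1).
    assert (HS1 : 0 <= S1) by (apply cond_pos_sum; intros; apply ee_nonneg; auto).
    set (d := Rmin 1 (eps / (2 * (Kr + 1) * (1 + sigma) * (S1 + 1)))).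
    assert (Hd : 0 < d <= 1).
    { unfold d. split. apply Rmin_pos. lra. apply Rdiv_lt_0_compat. lra. repeat apply Rmult_lt_0_compat; lra. apply Rmin_l. }
    assert (Hd' : d <= eps / (2 * (Kr + 1) * (1 + sigma) * (S1 + 1))) by apply Rmin_r.
    destruct (finite_max (fun m J => forall j, (J <= j)%nat -> forall x, in01 x -> Rabs (Du (phi j) m x - V m x) <= d) N1)
      as [J HJ].
    { intros k J J' HJJ P j Hj. apply P. lia. }
    { intros k Hk. apply HUV. lra. }
    exists J. intros j Hj W HW N.
    set (Z := fun m x => Du (phi j) m x - V m x).
    assert (HZc : forall m, cont01 (Z m)) by (intros; apply cont01_minus; auto).
    assert (HZC : Cinf01 (fun x => f x * u (phi j) x - v x) (Leib F Z)).
    { apply (Cinf01_ext (fun x => f x * (u (phi j) x - V 0%nat x))).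
      { intros; unfold v; ring. }
      apply Leib_Cinf; auto. split; [|split].
      + intros x Hx. destruct (HCi (phi j)) as [A _]. unfold Z. rewrite A; auto.
      + intros n x Hx. apply derivable_pt_lim_minus. apply (HCi (phi j)); auto. apply HVC; auto.
      + intros n x Hx. apply HZc; auto. }
    eapply Rle_trans. apply Y_partial_le; auto. intros n; eapply Cinf01_cont; eauto.
    rewrite (sum_eq _ (fun n => coef sigma n * (1 + INR n / sigma) * En sigma (Leib F Z) n)).
    2:{ intros n _. f_equal. apply En_ext. intros x Hx. eapply Cinf01_unique; eauto. }
    eapply Rle_trans. apply sum_Rle. intros n Hn. apply (main_est sigma r C F Z n); auto.
    assert (HEU := ee_sum sigma M (u (phi j)) (Du (phi j)) Hs (HCi _) (Hu1 _) (HM _) N).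
    eapply Rle_trans. apply (tail_bound (fun m => ee sigma m * En sigma Z m) (ee sigma) r (Kc sigma r C)
       ((1 + sigma) * d ^ 2) AW N N1); auto.
    + apply Rmult_le_pos. lra. apply pow2_ge_0.
    + intros m. apply Rmult_le_pos. apply ee_nonneg; auto. apply En_nonneg; auto.
    + intros m; apply ee_nonneg; auto.
    + intros m Hm. apply Rmult_le_compat_l. apply ee_nonneg; auto.
      apply En_small; auto. intros x Hx; apply (HJ m Hm j Hj x Hx).
    + apply Rle_trans with (sum_f_R0 (fun m => 2 * (ee sigma m * En sigma (Du (phi j)) m) + 2 * (ee sigma m * En sigma V m)) N).
      { apply sum_Rle. intros m Hm. pose proof (ee_nonneg sigma m Hs).
        pose proof (En_split2 sigma (Du (phi j)) V m Hs (HDc _ _) (HVc _)). unfold Z. nra. }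
      rewrite plus_sum, sum_scal_l, sum_scal_l. pose proof (HAV N). unfold AW. lra.
    + fold Kr. fold S1.
      assert (A1 : Kr * ((1 + sigma) * d ^ 2 * S1) <= eps / 2).
      { assert (d ^ 2 <= d) by nra.
        apply Rle_trans with ((Kr + 1) * ((1 + sigma) * (S1 + 1)) * d).
        { assert (0 <= (1 + sigma) * d ^ 2) by (apply Rmult_le_pos; [lra|apply pow2_ge_0]).
          apply Rle_trans with ((Kr + 1) * ((1 + sigma) * d ^ 2 * (S1 + 1))).
          apply Rmult_le_compat. auto. apply Rmult_le_pos; auto. lra.
          apply Rmult_le_compat_l; auto. lra.
          replace ((Kr + 1) * ((1 + sigma) * (S1 + 1)) * d) with ((Kr + 1) * ((1 + sigma) * d * (S1 + 1))) by ring.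
          apply Rmult_le_compat_l. lra. apply Rmult_le_compat_r. lra. apply Rmult_le_compat_l; lra. }
        apply Rle_trans with ((Kr + 1) * ((1 + sigma) * (S1 + 1)) * (eps / (2 * (Kr + 1) * (1 + sigma) * (S1 + 1)))).
        apply Rmult_le_compat_l; [apply Rmult_le_pos; [lra | apply Rmult_le_pos; lra] | exact Hd'].
        right. field. repeat split; lra. }
      assert (A2 : Kr * (AW / (INR N1 + 1)) <= eps / 2).
      { pose proof (pos_INR N1).
        apply Rle_trans with ((Kr + 1) * (AW + 1) * / (INR N1 + 1)).
        { unfold Rdiv. rewrite <- Rmult_assoc. apply Rmult_le_compat_r.
          left; apply Rinv_0_lt_compat; lra. nra. }
        apply Rle_trans with ((Kr + 1) * (AW + 1) * (eps / (2 * (Kr + 1) * (AW + 1)))).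
        apply Rmult_le_compat_l. nra. lra.
        right. field. split; lra. }
      replace (Kr * ((1 + sigma) * d ^ 2 * S1 + AW / (INR N1 + 1))) with
        (Kr * ((1 + sigma) * d ^ 2 * S1) + Kr * (AW / (INR N1 + 1))) by ring.
      lra.
Qed.
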